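(* Let $\alpha=\alpha(s)$ be a unit speed semi-real spatial quaternionic curve in $\mathbb{R}^3_1$. Then: (i) $\alpha$ is a semi-real spatial quaternionic rectifying curve with a spacelike rectifying plane if and only if, up to parametrization, $\alpha(t)=y(t)\frac{a}{\cos t}$ with $a>0$, where $y(t)$ is a unit speed spatial spacelike quaternionic curve lying in the pseudosphere $S^2_1(1)$; (ii) $\alpha$ is a semi-real spatial spacelike (timelike) quaternionic rectifying curve with a timelike rectifying plane and a spacelike (timelike) position vector if and only if, up to parametrization, $\alpha(t)=y(t)\frac{a}{\sinh t}$ with $a>0$, where $y(t)$ is a unit speed spatial timelike (spacelike) quaternionic curve lying in the pseudosphere $S^2_1(1)$ (pseudohyperbolic space $H^2_0(1)$); (iii) $\alpha$ is a semi-real spatial spacelike (timelike) quaternionic rectifying curve with a timelike rectifying plane and a timelike (spacelike) position vector if and only if, up to parametrization, $\alpha(t)=y(t)\frac{a}{\cosh t}$ with $a>0$, where $y(t)$ is a unit speed spatial spacelike (timelike) quaternionic curve lying in the pseudohyperbolic space $H^2_0(1)$ (pseudosphere $S^2_1(1)$).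
   Context: $\mathbb{R}^3_1$ is the semi-Euclidean (Minkowski) 3-space, identified with the semi-real spatial quaternions $q=q_1\mathbf{e}_1+q_2\mathbf{e}_2+q_3\mathbf{e}_3$, with inner product $h(p,q)=p_1q_1+p_2q_2-p_3q_3$ and norm $N(q)=\sqrt{|h(q,q)|}$. A vector $v$ is spacelike if $h(v,v)>0$ (or $v=0$) and timelike if $h(v,v)<0$; a curve is spacelike/timelike if its tangent is. The pseudosphere is $S^2_1(1)=\{x\in\mathbb{R}^3_1: h(x,x)=1\}$ and the pseudohyperbolic space is $H^2_0(1)=\{x\in\mathbb{R}^3_1: h(x,x)=-1\}$. For a unit speed curve with non-null Frenet frame $\{\mathbf{t},\mathbf{n}_1,\mathbf{n}_2\}$ (tangent, principal normal, binormal), the rectifying plane is the plane spanned by $\mathbf{t}$ and $\mathbf{n}_2$, and $\alpha$ is a rectifying curve if $\alpha(s)=\lambda(s)\mathbf{t}(s)+\mu(s)\mathbf{n}_2(s)$ for some differentiable functions $\lambda,\mu$. *)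

(* Defs.v *)
From Stdlib Require Import Reals.
From Coquelicot Require Import Coquelicot.
Open Scope R_scope.

(** Semi-real spatial quaternions q = q1 e1 + q2 e2 + q3 e3, i.e. R^3_1. *)
Record V3 := mkV3 { c1 : R; c2 : R; c3 : R }.

Definition hm (p q : V3) : R := c1 p * c1 q + c2 p * c2 q - c3 p * c3 q.
Definition Nrm (q : V3) : R := sqrt (Rabs (hm q q)).

Definition vadd (p q : V3) : V3 := mkV3 (c1 p + c1 q) (c2 p + c2 q) (c3 p + c3 q).
(** product of a real (scalar) quaternion r with a spatial quaternion q *)
Definition vscal (r : R) (q : V3) : V3 := mkV3 (r * c1 q) (r * c2 q) (r * c3 q).

(** causal characters (the context counts 0 as spacelike) *)
Definition spacelike (v : V3) : Prop := hm v v > 0 \/ v = mkV3 0 0 0.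
Definition timelike (v : V3) : Prop := hm v v < 0.

Definition in_S21 (x : V3) : Prop := hm x x = 1.
Definition in_H20 (x : V3) : Prop := hm x x = -1.

Definition is_open_itv (I : R -> Prop) : Prop :=
  exists a b : Rbar, Rbar_lt a b /\ forall t, I t <-> (Rbar_lt a t /\ Rbar_lt t b).

Definition vD (f : R -> V3) (x : R) : V3 :=
  mkV3 (Derive (fun s => c1 (f s)) x) (Derive (fun s => c2 (f s)) x)
       (Derive (fun s => c3 (f s)) x).

Definition rsmooth (I : R -> Prop) (f : R -> R) : Prop :=
  forall t, I t -> forall n, ex_derive_n f n t.
Definition vsmooth (I : R -> Prop) (f : R -> V3) : Prop :=
  rsmooth I (fun s => c1 (f s)) /\ rsmooth I (fun s => c2 (f s)) /\
  rsmooth I (fun s => c3 (f s)).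

Definition unit_speed (I : R -> Prop) (f : R -> V3) : Prop :=
  forall s, I s -> Nrm (vD f s) = 1.

(** Non-null Frenet frame {t, n1, n2} of a unit speed curve alpha on I:
    t = alpha', t' non-null (so kappa = N(t') > 0), n1 = t'/kappa,
    n2 a smooth unit non-null vector field orthogonal to t and n1
    (determined up to sign; the rectifying plane span{t,n2} does not
    depend on that sign). *)
Definition frenet_frame (I : R -> Prop) (alpha T N1 N2 : R -> V3) : Prop :=
  vsmooth I N2 /\
  forall s, I s ->
    T s = vD alpha s /\
    hm (vD T s) (vD T s) <> 0 /\
    N1 s = vscal (/ Nrm (vD T s)) (vD T s) /\
    Rabs (hm (N2 s) (N2 s)) = 1 /\
    hm (N2 s) (T s) = 0 /\ hm (N2 s) (N1 s) = 0.

Definition has_nonnull_frenet_frame (I : R -> Prop) (alpha : R -> V3) : Prop :=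
  exists T N1 N2, frenet_frame I alpha T N1 N2.

Definition spacelike_plane (u v : V3) : Prop :=
  forall a b : R, (a <> 0 \/ b <> 0) ->
    hm (vadd (vscal a u) (vscal b v)) (vadd (vscal a u) (vscal b v)) > 0.
Definition timelike_plane (u v : V3) : Prop :=
  (forall a b : R, vadd (vscal a u) (vscal b v) = mkV3 0 0 0 -> a = 0 /\ b = 0) /\
  exists a b : R,
    hm (vadd (vscal a u) (vscal b v)) (vadd (vscal a u) (vscal b v)) < 0.

Definition rectifying_with (I : R -> Prop) (alpha : R -> V3)
    (P : V3 -> V3 -> Prop) : Prop :=
  exists (T N1 N2 : R -> V3) (lam mu : R -> R),
    frenet_frame I alpha T N1 N2 /\
    (forall s, I s ->
       ex_derive lam s /\ ex_derive mu s /\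
       alpha s = vadd (vscal (lam s) (T s)) (vscal (mu s) (N2 s))) /\
    (forall s, I s -> P (T s) (N2 s)).

Definition spacelike_curve (I : R -> Prop) (f : R -> V3) : Prop :=
  forall s, I s -> spacelike (vD f s).
Definition timelike_curve (I : R -> Prop) (f : R -> V3) : Prop :=
  forall s, I s -> timelike (vD f s).
Definition spacelike_position (I : R -> Prop) (f : R -> V3) : Prop :=
  forall s, I s -> spacelike (f s).
Definition timelike_position (I : R -> Prop) (f : R -> V3) : Prop :=
  forall s, I s -> timelike (f s).

Definition reparam (J I : R -> Prop) (phi : R -> R) : Prop :=
  rsmooth J phi /\
  (forall t, J t -> I (phi t) /\ Derive phi t <> 0) /\
  (forall s, I s -> exists t, J t /\ phi t = s) /\
  (forall t1 t2, J t1 -> J t2 -> phi t1 = phi t2 -> t1 = t2).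

Definition rep_form (I : R -> Prop) (alpha : R -> V3) (g : R -> R)
    (C : V3 -> Prop) (S : V3 -> Prop) : Prop :=
  exists (J : R -> Prop) (phi : R -> R) (y : R -> V3) (a : R),
    is_open_itv J /\ reparam J I phi /\ 0 < a /\
    vsmooth J y /\ unit_speed J y /\
    (forall t, J t -> C (vD y t) /\ S (y t) /\ g t <> 0 /\
                      alpha (phi t) = vscal (a / g t) (y t)).

(* Main.v *)
From Pilot Require Import Defs.
From Stdlib Require Import Reals Lra Psatz.
From Coquelicot Require Import Coquelicot.
Import Pilot.Defs.
Open Scope R_scope.
Definition openP (U : R -> Prop) := forall x, U x -> locally x U.
Lemma loc_eq (U : R -> Prop) (f g : R -> R) x :
  openP U -> U x -> (forall t, U t -> f t = g t) -> locally x (fun t => f t = g t).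
Proof. intros HU Hx H. apply (filter_imp U); auto. Qed.
Fixpoint Cn (n : nat) (U : R -> Prop) (f : R -> R) : Prop :=
  match n with
  | O => True
  | S m => (forall t, U t -> ex_derive f t) /\ Cn m U (Derive f)
  end.

Lemma Cn_ext n U f g : openP U -> (forall t, U t -> f t = g t) -> Cn n U f -> Cn n U g.
Proof.
  revert f g; induction n as [|n IH]; intros f g HU Hfg Hf; simpl in *; auto.
  destruct Hf as [Hd Hn]. split.
  - intros t Ht. apply (ex_derive_ext_loc f); auto. apply (loc_eq U); auto.
  - apply (IH (Derive f)); auto. intros t Ht. apply Derive_ext_loc.
    apply (loc_eq U); auto.
Qed.

Lemma Cn_S n U f : Cn (S n) U f -> Cn n U f.
Proof.
  revert f; induction n as [|n IH]; intros f Hf; simpl in *; auto.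
  destruct Hf as [Hd [Hd' Hn]]. split; auto; apply IH; simpl; auto.
Qed.

Lemma Cn_sub n U V f : (forall t, V t -> U t) -> Cn n U f -> Cn n V f.
Proof.
  revert f; induction n as [|n IH]; intros f HVU Hf; simpl in *; auto.
  destruct Hf as [Hd Hn]; split; auto.
Qed.

Lemma Cn_const n U c : openP U -> Cn n U (fun _ => c).
Proof.
  revert c; induction n as [|n IH]; intros c HU; simpl; auto. split.
  - intros; apply ex_derive_const.
  - apply (Cn_ext n U (fun _ => 0)); auto. intros; now rewrite Derive_const.
Qed.

Lemma Cn_id n U : openP U -> Cn n U (fun x => x).
Proof.
  destruct n as [|n]; intros HU; simpl; auto. split.
  - intros; apply ex_derive_id.
  - apply (Cn_ext n U (fun _ => 1)). auto. intros. now rewrite Derive_id.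
    apply Cn_const; auto.
Qed.

Lemma Cn_plus n U f g : openP U -> Cn n U f -> Cn n U g -> Cn n U (fun x => f x + g x).
Proof.
  revert f g; induction n as [|n IH]; intros f g HU Hf Hg; simpl in *; auto.
  destruct Hf as [Hf1 Hf2]; destruct Hg as [Hg1 Hg2]. split.
  - intros t Ht. apply (ex_derive_plus f g); auto.
  - apply (Cn_ext n U (fun x => Derive f x + Derive g x)); auto.
    intros t Ht. rewrite Derive_plus; auto.
Qed.

Lemma Cn_mult n U f g : openP U -> Cn n U f -> Cn n U g -> Cn n U (fun x => f x * g x).
Proof.
  revert f g; induction n as [|n IH]; intros f g HU Hf Hg; simpl; auto.
  pose proof (Cn_S n U f Hf) as Hf'. pose proof (Cn_S n U g Hg) as Hg'.
  destruct Hf as [Hf1 Hf2]; destruct Hg as [Hg1 Hg2]. split.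
  - intros t Ht. apply ex_derive_mult; auto.
  - apply (Cn_ext n U (fun x => Derive f x * g x + f x * Derive g x)); auto.
    intros t Ht. rewrite Derive_mult; auto.
    apply Cn_plus; auto.
Qed.

Lemma Cn_scal n U k f : openP U -> Cn n U f -> Cn n U (fun x => k * f x).
Proof. intros; apply (Cn_mult n U (fun _ => k) f); auto. apply Cn_const; auto. Qed.

Lemma Cn_opp n U f : openP U -> Cn n U f -> Cn n U (fun x => - f x).
Proof. intros. apply (Cn_ext n U (fun x => (-1) * f x)); auto. intros; ring. apply Cn_scal; auto. Qed.

Lemma Cn_minus n U f g : openP U -> Cn n U f -> Cn n U g -> Cn n U (fun x => f x - g x).
Proof. intros. apply Cn_plus; auto. apply Cn_opp; auto. Qed.

Lemma Cn_inv n U g : openP U -> (forall t, U t -> g t <> 0) -> Cn n U g -> Cn n U (fun x => / g x).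
Proof.
  revert g; induction n as [|n IH]; intros g HU Hnz Hg; simpl; auto.
  pose proof (Cn_S n U g Hg) as Hg'.
  destruct Hg as [Hg1 Hg2]. split.
  - intros t Ht. apply ex_derive_inv; auto.
  - apply (Cn_ext n U (fun x => (- Derive g x) * ((/ g x) * (/ g x)))); auto.
    intros t Ht. rewrite Derive_inv; auto. field. auto.
    apply Cn_mult; auto. apply Cn_opp; auto. apply Cn_mult; auto.
Qed.

Lemma Cn_div n U f g : openP U -> (forall t, U t -> g t <> 0) -> Cn n U f -> Cn n U g ->
  Cn n U (fun x => f x / g x).
Proof. intros. apply (Cn_mult n U f (fun x => / g x)); auto. apply Cn_inv; auto. Qed.

Lemma Cn_comp n U V f p : openP U -> openP V -> (forall t, U t -> V (p t)) ->
  Cn n V f -> Cn n U p -> Cn n U (fun x => f (p x)).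
Proof.
  revert f p; induction n as [|n IH]; intros f p HU HV HUV Hf Hp; simpl; auto.
  pose proof (Cn_S n U p Hp) as Hp'.
  pose proof (Cn_S n V f Hf) as Hf'.
  destruct Hf as [Hf1 Hf2]; destruct Hp as [Hp1 Hp2]. split.
  - intros t Ht. apply ex_derive_comp; auto.
  - apply (Cn_ext n U (fun x => Derive f (p x) * Derive p x)); auto.
    intros t Ht. rewrite (Derive_comp f p t); [ring|auto|auto].
    apply Cn_mult; auto.
Qed.

Lemma Derive_n_Derive f j x : Derive_n (Derive f) j x = Derive_n f (S j) x.
Proof.
  revert x; induction j as [|j IH]; intros x; simpl; auto.
  apply Derive_ext. intros; apply IH.
Qed.

Lemma rsmooth_Cn U f : openP U -> rsmooth U f -> forall n, Cn n U f.
Proof.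
  intros HU Hs n. revert f Hs; induction n as [|n IH]; intros f Hs; simpl; auto. split.
  - intros t Ht. exact (Hs t Ht 1%nat).
  - apply IH. intros t Ht k. destruct k as [|k]; simpl; auto.
    apply (ex_derive_ext (Derive_n f (S k))). intros; symmetry; apply Derive_n_Derive.
    exact (Hs t Ht (S (S k))).
Qed.

Lemma Cn_rsmooth U f : (forall n, Cn n U f) -> rsmooth U f.
Proof.
  intros H t Ht k.
  assert (K : forall n f, Cn n U f -> forall k, (k < n)%nat -> ex_derive (Derive_n f k) t).
  { clear H k. intros n; induction n as [|n IH]; intros g Hf k Hk. lia.
    destruct Hf as [Hf1 Hf2]. destruct k as [|k]. simpl. apply Hf1; auto.
    apply (ex_derive_ext (Derive_n (Derive g) k)). intros; apply Derive_n_Derive.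
    apply IH; auto. lia. }
  destruct k as [|k]; simpl; auto. apply (K (S (S k))). apply H. lia.
Qed.

Definition convexP (U : R -> Prop) := forall x y z, U x -> U z -> x <= y <= z -> U y.
Definition upP (U : R -> Prop) := forall t, U t -> exists u, t < u /\ U u.
Definition downP (U : R -> Prop) := forall t, U t -> exists u, u < t /\ U u.

Lemma itv_props U : is_open_itv U -> convexP U /\ upP U /\ downP U.
Proof.
  intros [a [b [Hab HU]]]. split; [|split].
  - intros x y z Hx Hz Hy. apply HU in Hx; apply HU in Hz. apply HU.
    destruct Hx as [Hx1 Hx2]; destruct Hz as [Hz1 Hz2]. split.
    + destruct a; simpl in *; auto; lra.
    + destruct b; simpl in *; auto; lra.
  - intros t Ht. apply HU in Ht. destruct Ht as [H1 H2].
    destruct b as [b| |]; simpl in H2.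
    + exists ((t+b)/2). split. lra. apply HU. split.
      destruct a; simpl in *; auto; lra. simpl; lra.
    + exists (t+1). split. lra. apply HU. split.
      destruct a; simpl in *; auto; lra. simpl; auto.
    + contradiction.
  - intros t Ht. apply HU in Ht. destruct Ht as [H1 H2].
    destruct a as [a| |]; simpl in H1.
    + exists ((t+a)/2). split. lra. apply HU. split. simpl; lra.
      destruct b; simpl in *; auto; lra.
    + contradiction.
    + exists (t-1). split. lra. apply HU. split. simpl; auto.
      destruct b; simpl in *; auto; lra.
Qed.

Lemma cvx_open U : convexP U -> upP U -> downP U -> openP U.
Proof.
  intros Hc Hu Hd x Hx. destruct (Hu x Hx) as [u [Hu1 Hu2]].
  destruct (Hd x Hx) as [v [Hv1 Hv2]].
  assert (He : 0 < Rmin (u - x) (x - v)) by (apply Rmin_pos; lra).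
  exists (mkposreal _ He). intros y Hy. change (Rabs (y - x) < Rmin (u - x) (x - v)) in Hy.
  pose proof (Rmin_l (u-x) (x-v)). pose proof (Rmin_r (u-x) (x-v)).
  apply Rabs_def2 in Hy. apply (Hc v y u); auto; lra.
Qed.

Lemma itv_open U : is_open_itv U -> openP U.
Proof. intros H. destruct (itv_props U H) as [? [? ?]]. now apply cvx_open. Qed.

Lemma props_itv U : (exists t, U t) -> convexP U -> upP U -> downP U -> is_open_itv U.
Proof.
  intros [t0 Ht0] Hc Hu Hd.
  exists (Glb_Rbar U), (Lub_Rbar U).
  destruct (Lub_Rbar_correct U) as [Hub Hlub].
  destruct (Glb_Rbar_correct U) as [Hlb Hglb].
  assert (K1 : forall t, U t -> Rbar_lt t (Lub_Rbar U)).
  { intros t Ht. destruct (Hu t Ht) as [u [Hu1 Hu2]].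
    eapply Rbar_lt_le_trans with (y := Finite u). simpl; auto. apply Hub; auto. }
  assert (K2 : forall t, U t -> Rbar_lt (Glb_Rbar U) t).
  { intros t Ht. destruct (Hd t Ht) as [u [Hu1 Hu2]].
    eapply Rbar_le_lt_trans with (y := Finite u). apply Hlb; auto. simpl; auto. }
  split.
  - eapply Rbar_lt_trans with (y := Finite t0). apply K2; auto. apply K1; auto.
  - intros t; split.
    + intros Ht; split; auto.
    + intros [H1 H2].
      assert (E1 : exists z, U z /\ t < z).
      { apply Classical_Prop.NNPP. intros Hn.
        assert (Hub' : is_ub_Rbar U t).
        { intros z Hz. simpl. apply Rnot_lt_le. intros Hl. apply Hn. eauto. }
        apply Hlub in Hub'. apply (Rbar_lt_not_le _ _ H2). auto. }
      assert (E2 : exists z, U z /\ z < t).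
      { apply Classical_Prop.NNPP. intros Hn.
        assert (Hlb' : is_lb_Rbar U t).
        { intros z Hz. simpl. apply Rnot_lt_le. intros Hl. apply Hn. eauto. }
        apply Hglb in Hlb'. apply (Rbar_lt_not_le _ _ H1). auto. }
      destruct E1 as [z [Hz1 Hz2]]; destruct E2 as [w [Hw1 Hw2]].
      apply (Hc w t z); auto; lra.
Qed.

Lemma d_sin x : is_derive sin x (cos x).
Proof. apply is_derive_Reals, derivable_pt_lim_sin. Qed.
Lemma d_cos x : is_derive cos x (- sin x).
Proof. apply is_derive_Reals, derivable_pt_lim_cos. Qed.
Lemma d_sinh x : is_derive sinh x (cosh x).
Proof. apply is_derive_Reals, derivable_pt_lim_sinh. Qed.
Lemma d_cosh x : is_derive cosh x (sinh x).
Proof. apply is_derive_Reals, derivable_pt_lim_cosh. Qed.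
Lemma d_nsin x : is_derive (fun x => - sin x) x (- cos x).
Proof. apply (is_derive_opp sin), d_sin. Qed.

Lemma Cn_sincos n U : openP U -> Cn n U sin /\ Cn n U cos.
Proof.
  intros HU; induction n as [|n [IH1 IH2]]; simpl; auto. split; split.
  - intros t _; eexists; apply d_sin.
  - apply (Cn_ext n U cos); auto. intros; symmetry; apply is_derive_unique, d_sin.
  - intros t _; eexists; apply d_cos.
  - apply (Cn_ext n U (fun x => - sin x)); auto. intros; symmetry; apply is_derive_unique, d_cos.
    apply Cn_opp; auto.
Qed.

Lemma Cn_sinhcosh n U : openP U -> Cn n U sinh /\ Cn n U cosh.
Proof.
  intros HU; induction n as [|n [IH1 IH2]]; simpl; auto. split; split.
  - intros t _; eexists; apply d_sinh.
  - apply (Cn_ext n U cosh); auto. intros; symmetry; apply is_derive_unique, d_sinh.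
  - intros t _; eexists; apply d_cosh.
  - apply (Cn_ext n U sinh); auto. intros; symmetry; apply is_derive_unique, d_cosh.
Qed.

Lemma cosh_sinh_id x : cosh x ^ 2 - sinh x ^ 2 = 1.
Proof.
  unfold cosh, sinh. rewrite exp_Ropp. pose proof (exp_pos x). field. lra.
Qed.

Lemma cosh_pos x : 0 < cosh x.
Proof. unfold cosh. pose proof (exp_pos x); pose proof (exp_pos (-x)). lra. Qed.

Lemma sinh_pos x : 0 < x -> 0 < sinh x.
Proof. intros H. rewrite <- sinh_0. apply sinh_lt; auto. Qed.

Definition artanh (x : R) := ln ((1 + x) / (1 - x)) / 2.
Definition arcoth (x : R) := ln ((x + 1) / (x - 1)) / 2.

Lemma tanh_exp t : sinh t / cosh t = (exp (2 * t) - 1) / (exp (2 * t) + 1).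
Proof.
  unfold sinh, cosh. rewrite exp_Ropp. replace (2 * t) with (t + t) by ring.
  rewrite exp_plus. pose proof (exp_pos t). field. nra.
Qed.

Lemma coth_exp t : 0 < t -> cosh t / sinh t = (exp (2 * t) + 1) / (exp (2 * t) - 1).
Proof.
  intros Ht. pose proof (sinh_pos t Ht) as Hs.
  unfold sinh, cosh in *. rewrite exp_Ropp in *. replace (2 * t) with (t + t) by ring.
  rewrite exp_plus. pose proof (exp_pos t).
  assert (exp t * exp t - 1 <> 0).
  { intros Hc. assert (exp t - / exp t = 0). field_simplify; [|lra].
    replace (exp t ^ 2 - 1) with (exp t * exp t - 1) by ring. rewrite Hc. field. lra. lra. }
  field. split; auto. lra.
Qed.

Lemma tanh_artanh x : -1 < x < 1 -> sinh (artanh x) / cosh (artanh x) = x.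
Proof.
  intros Hx. rewrite tanh_exp. unfold artanh.
  replace (2 * (ln ((1 + x) / (1 - x)) / 2)) with (ln ((1 + x) / (1 - x))) by field.
  rewrite exp_ln. field. lra. apply Rdiv_lt_0_compat; lra.
Qed.

Lemma coth_arcoth x : 1 < x -> 0 < arcoth x /\ cosh (arcoth x) / sinh (arcoth x) = x.
Proof.
  intros Hx. assert (Hq : 1 < (x + 1) / (x - 1)).
  { apply (Rmult_lt_reg_r (x - 1)). lra. field_simplify; lra. }
  assert (Hp : 0 < arcoth x).
  { unfold arcoth. pose proof (ln_increasing 1 _ Rlt_0_1 Hq) as Hl. rewrite ln_1 in Hl. lra. }
  split; auto. rewrite coth_exp; auto. unfold arcoth.
  replace (2 * (ln ((x + 1) / (x - 1)) / 2)) with (ln ((x + 1) / (x - 1))) by field.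
  rewrite exp_ln by lra. field. split; lra.
Qed.

Definition VD (u : R -> V3) (s : R) (w : V3) : Prop :=
  is_derive (fun s => c1 (u s)) s (c1 w) /\ is_derive (fun s => c2 (u s)) s (c2 w) /\
  is_derive (fun s => c3 (u s)) s (c3 w).

Lemma V3_eq (p q : V3) : c1 p = c1 q -> c2 p = c2 q -> c3 p = c3 q -> p = q.
Proof. destruct p, q; simpl; intros; subst; auto. Qed.

Lemma VD_vD u s w : VD u s w -> vD u s = w.
Proof.
  intros [H1 [H2 H3]]. unfold vD. apply V3_eq; simpl; apply is_derive_unique; auto.
Qed.

Lemma VD_unique u s w w' : VD u s w -> VD u s w' -> w = w'.
Proof. intros H H'. rewrite <- (VD_vD _ _ _ H), <- (VD_vD _ _ _ H'). auto. Qed.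

Lemma smooth_VD U u s : vsmooth U u -> U s -> VD u s (vD u s).
Proof.
  intros [H1 [H2 H3]] Hs. unfold vD. split; [|split]; simpl; apply Derive_correct.
  all: first [exact (H1 s Hs 1%nat) | exact (H2 s Hs 1%nat) | exact (H3 s Hs 1%nat)].
Qed.

Lemma smooth_VD2 U u s : vsmooth U u -> U s -> VD (vD u) s (vD (vD u) s).
Proof.
  intros [H1 [H2 H3]] Hs. unfold vD. split; [|split]; simpl; apply Derive_correct.
  all: first [exact (H1 s Hs 2%nat) | exact (H2 s Hs 2%nat) | exact (H3 s Hs 2%nat)].
Qed.

Lemma is_derive_eq (f : R -> R) (x l l' : R) : is_derive f x l -> l = l' -> is_derive f x l'.
Proof. intros H ->; auto. Qed.

Lemma d_mult (f g : R -> R) (x df dg : R) : is_derive f x df -> is_derive g x dg ->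
  is_derive (fun t => f t * g t) x (df * g x + f x * dg).
Proof. intros Hf Hg. apply (@is_derive_mult R_AbsRing f g); auto. intros; apply Rmult_comm. Qed.
Lemma d_plus (f g : R -> R) (x df dg : R) : is_derive f x df -> is_derive g x dg ->
  is_derive (fun t => f t + g t) x (df + dg).
Proof. intros Hf Hg. apply (@is_derive_plus R_AbsRing R_NormedModule f g); auto. Qed.
Lemma d_minus (f g : R -> R) (x df dg : R) : is_derive f x df -> is_derive g x dg ->
  is_derive (fun t => f t - g t) x (df - dg).
Proof. intros Hf Hg. apply (@is_derive_minus R_AbsRing R_NormedModule f g); auto. Qed.
Lemma d_comp (f g : R -> R) (x df dg : R) : is_derive f (g x) df -> is_derive g x dg ->
  is_derive (fun t => f (g t)) x (df * dg).
Proof. intros Hf Hg. eapply is_derive_eq. apply (@is_derive_comp R_AbsRing R_NormedModule f g); eauto. simpl.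
  change (scal dg df) with (dg * df). ring. Qed.
Lemma d_const (c x : R) : is_derive (fun _ => c) x 0.
Proof. apply (@is_derive_const R_AbsRing R_NormedModule). Qed.

Lemma VD_hm u v s u' v' : VD u s u' -> VD v s v' ->
  is_derive (fun t => hm (u t) (v t)) s (hm u' (v s) + hm (u s) v').
Proof.
  intros [U1 [U2 U3]] [V1 [V2 V3]]. unfold hm.
  eapply is_derive_eq. apply d_minus. apply d_plus.
  apply (d_mult _ _ _ _ _ U1 V1). apply (d_mult _ _ _ _ _ U2 V2).
  apply (d_mult _ _ _ _ _ U3 V3). ring.
Qed.

Lemma VD_scal (r : R -> R) u s r' u' : is_derive r s r' -> VD u s u' ->
  VD (fun t => vscal (r t) (u t)) s (vadd (vscal r' (u s)) (vscal (r s) u')).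
Proof.
  intros Hr [U1 [U2 U3]]. split; [|split]; simpl.
  apply (d_mult _ _ _ _ _ Hr U1). apply (d_mult _ _ _ _ _ Hr U2). apply (d_mult _ _ _ _ _ Hr U3).
Qed.

Lemma VD_comp u p t w dp : VD u (p t) w -> is_derive p t dp ->
  VD (fun t => u (p t)) t (vscal dp w).
Proof.
  intros [U1 [U2 U3]] Hp. split; [|split]; simpl; eapply is_derive_eq.
  apply (d_comp (fun s => c1 (u s)) p); eauto. ring.
  apply (d_comp (fun s => c2 (u s)) p); eauto. ring.
  apply (d_comp (fun s => c3 (u s)) p); eauto. ring.
Qed.

Lemma VD_ext U u v s w : openP U -> U s -> (forall t, U t -> u t = v t) -> VD u s w -> VD v s w.
Proof.
  intros HU Hs He [U1 [U2 U3]]. split; [|split].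
  apply (is_derive_ext_loc (fun t => c1 (u t))); auto. apply (loc_eq U); auto. intros; rewrite He; auto.
  apply (is_derive_ext_loc (fun t => c2 (u t))); auto. apply (loc_eq U); auto. intros; rewrite He; auto.
  apply (is_derive_ext_loc (fun t => c3 (u t))); auto. apply (loc_eq U); auto. intros; rewrite He; auto.
Qed.

Lemma deriv_unique_loc U (f g : R -> R) s l l' : openP U -> U s ->
  (forall t, U t -> f t = g t) -> is_derive f s l -> is_derive g s l' -> l = l'.
Proof.
  intros HU Hs He Hf Hg. apply (is_derive_ext_loc f g) in Hf.
  rewrite <- (is_derive_unique _ _ _ Hf). apply is_derive_unique; auto.
  apply (loc_eq U); auto.
Qed.

Lemma Nrm_one v : Nrm v = 1 -> hm v v ^ 2 = 1.
Proof.
  unfold Nrm. intros H. assert (Rabs (hm v v) = 1).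
  { rewrite <- (sqrt_sqrt (Rabs (hm v v))) by apply Rabs_pos. rewrite H. ring. }
  rewrite <- (pow2_abs (hm v v)). rewrite H0. ring.
Qed.

Lemma one_Nrm v : hm v v ^ 2 = 1 -> Nrm v = 1.
Proof.
  intros H. unfold Nrm. assert (Rabs (hm v v) = 1).
  { rewrite <- (pow2_abs (hm v v)) in H. pose proof (Rabs_pos (hm v v)). nra. }
  rewrite H0. apply sqrt_1.
Qed.

Lemma sq_const_deriv U (f : R -> R) s df : openP U -> U s ->
  (forall t, U t -> f t ^ 2 = 1) -> is_derive f s df -> df = 0.
Proof.
  intros HU Hs Hc Hd.
  assert (Hd2 : is_derive (fun t => f t * f t) s (df * f s + f s * df)) by (apply d_mult; auto).
  assert (E : df * f s + f s * df = 0).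
  { apply (deriv_unique_loc U (fun t => f t * f t) (fun _ => 1) s); auto.
    intros t Ht. rewrite <- (Hc t Ht). ring. apply d_const. }
  pose proof (Hc s Hs). nra.
Qed.

Lemma TT'_zero I alpha s : openP I -> vsmooth I alpha -> unit_speed I alpha -> I s ->
  hm (vD alpha s) (vD (vD alpha) s) = 0.
Proof.
  intros HI Hsm Hu Hs.
  pose proof (smooth_VD2 I alpha s Hsm Hs) as H2.
  pose proof (VD_hm _ _ _ _ _ H2 H2) as Hd.
  assert (K' : hm (vD (vD alpha) s) (vD alpha s) + hm (vD alpha s) (vD (vD alpha) s) = 0).
  { apply (sq_const_deriv I (fun t => hm (vD alpha t) (vD alpha t)) s); auto.
    intros t Ht. apply Nrm_one. apply Hu; auto. }
  unfold hm in *. lra.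
Qed.

Definition V0 := mkV3 0 0 0.

Lemma ortho_zero (w u1 u2 u3 : V3) :
  hm u1 u2 = 0 -> hm u1 u3 = 0 -> hm u2 u3 = 0 ->
  hm u1 u1 <> 0 -> hm u2 u2 <> 0 -> hm u3 u3 <> 0 ->
  hm w u1 = 0 -> hm w u2 = 0 -> hm w u3 = 0 -> w = V0.
Proof.
  destruct w as [w1 w2 w3], u1 as [a1 a2 a3], u2 as [b1 b2 b3], u3 as [d1 d2 d3].
  unfold hm; simpl. intros H12 H13 H23 N1 N2 N3 W1 W2 W3.
  set (D := a1 * (b2 * d3 - b3 * d2) - a2 * (b1 * d3 - b3 * d1) + a3 * (b1 * d2 - b2 * d1)).
  assert (HD : - D ^ 2 =
    (a1*a1+a2*a2-a3*a3) * (b1*b1+b2*b2-b3*b3) * (d1*d1+d2*d2-d3*d3)).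
  { assert (G : - D ^ 2 =
      (a1*a1+a2*a2-a3*a3) * ((b1*b1+b2*b2-b3*b3) * (d1*d1+d2*d2-d3*d3) - (b1*d1+b2*d2-b3*d3)^2)
      - (a1*b1+a2*b2-a3*b3) * ((a1*b1+a2*b2-a3*b3) * (d1*d1+d2*d2-d3*d3) - (b1*d1+b2*d2-b3*d3)*(a1*d1+a2*d2-a3*d3))
      + (a1*d1+a2*d2-a3*d3) * ((a1*b1+a2*b2-a3*b3) * (b1*d1+b2*d2-b3*d3) - (b1*b1+b2*b2-b3*b3)*(a1*d1+a2*d2-a3*d3))).
    { unfold D. ring. }
    rewrite G, H12, H13, H23. ring. }
  assert (HDn : D <> 0).
  { intros HD0. rewrite HD0 in HD. apply N1. 
    assert ((a1*a1+a2*a2-a3*a3) * (b1*b1+b2*b2-b3*b3) * (d1*d1+d2*d2-d3*d3) = 0) by (rewrite <- HD; ring).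
    apply Rmult_integral in H. destruct H as [H|H]. apply Rmult_integral in H.
    destruct H; auto. contradiction. contradiction. }
  assert (E1 : D * w1 = (b2*d3-b3*d2) * (w1*a1+w2*a2-w3*a3) + (d2*a3-d3*a2) * (w1*b1+w2*b2-w3*b3)
                       + (a2*b3-a3*b2) * (w1*d1+w2*d2-w3*d3)) by (unfold D; ring).
  assert (E2 : D * w2 = (b3*d1-b1*d3) * (w1*a1+w2*a2-w3*a3) + (d3*a1-d1*a3) * (w1*b1+w2*b2-w3*b3)
                       + (a3*b1-a1*b3) * (w1*d1+w2*d2-w3*d3)) by (unfold D; ring).
  assert (E3 : D * (-w3) = (b1*d2-b2*d1) * (w1*a1+w2*a2-w3*a3) + (d1*a2-d2*a1) * (w1*b1+w2*b2-w3*b3)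
                       + (a1*b2-a2*b1) * (w1*d1+w2*d2-w3*d3)) by (unfold D; ring).
  rewrite W1, W2, W3 in *.
  unfold V0; f_equal.
  - apply (Rmult_eq_reg_l D); auto. rewrite E1; ring.
  - apply (Rmult_eq_reg_l D); auto. rewrite E2; ring.
  - apply (Rmult_eq_reg_l D); auto. assert (D * - w3 = 0) by (rewrite E3; ring). lra.
Qed.

Lemma hm_sym p q : hm p q = hm q p.
Proof. unfold hm; ring. Qed.
Lemma hm_addl p q u : hm (vadd p q) u = hm p u + hm q u.
Proof. unfold hm; simpl; ring. Qed.
Lemma hm_scall k p u : hm (vscal k p) u = k * hm p u.
Proof. unfold hm; simpl; ring. Qed.
Lemma hm_addr p q u : hm u (vadd p q) = hm u p + hm u q.
Proof. unfold hm; simpl; ring. Qed.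
Lemma hm_scalr k p u : hm u (vscal k p) = k * hm u p.
Proof. unfold hm; simpl; ring. Qed.
Lemma hm_subl v w u : hm (mkV3 (c1 v - c1 w) (c2 v - c2 w) (c3 v - c3 w)) u = hm v u - hm w u.
Proof. unfold hm; simpl; ring. Qed.

Lemma decomp3 (v u1 u2 u3 : V3) :
  hm u1 u2 = 0 -> hm u1 u3 = 0 -> hm u2 u3 = 0 ->
  hm u1 u1 <> 0 -> hm u2 u2 <> 0 -> hm u3 u3 <> 0 ->
  v = vadd (vadd (vscal (hm v u1 / hm u1 u1) u1) (vscal (hm v u2 / hm u2 u2) u2))
           (vscal (hm v u3 / hm u3 u3) u3).
Proof.
  intros H12 H13 H23 N1 N2 N3.
  set (w := vadd (vadd (vscal (hm v u1 / hm u1 u1) u1) (vscal (hm v u2 / hm u2 u2) u2))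
           (vscal (hm v u3 / hm u3 u3) u3)).
  set (z := mkV3 (c1 v - c1 w) (c2 v - c2 w) (c3 v - c3 w)).
  assert (Hz : z = V0).
  { apply (ortho_zero z u1 u2 u3); auto.
    all: unfold z, w; rewrite hm_subl, !hm_addl, !hm_scall.
    all: rewrite ?(hm_sym u2 u1), ?(hm_sym u3 u1), ?(hm_sym u3 u2), ?H12, ?H13, ?H23.
    all: field; auto. }
  unfold z, V0 in Hz. injection Hz as E1 E2 E3. apply V3_eq; unfold w; simpl; lra.
Qed.

Lemma two_timelike (u v : V3) : hm u u < 0 -> hm v v < 0 -> hm u v <> 0.
Proof.
  destruct u as [u1 u2 u3], v as [v1 v2 v3]; unfold hm; simpl. intros Hu Hv Huv.
  assert (K : (u1*v1+u2*v2)^2 <= (u1*u1+u2*u2)*(v1*v1+v2*v2)).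
  { assert (0 <= (u1*v2-u2*v1)^2) by apply pow2_ge_0. nra. }
  assert (u1*v1+u2*v2 = u3*v3) by lra.
  assert ((u1*u1+u2*u2)*(v1*v1+v2*v2) < (u3*u3)*(v3*v3)).
  { apply Rle_lt_trans with ((u3*u3)*(v1*v1+v2*v2)).
    apply Rmult_le_compat_r. nra. lra.
    apply Rmult_lt_compat_l; nra. }
  rewrite H in K. nra.
Qed.

Lemma inv_sq1 x : x ^ 2 = 1 -> / x = x.
Proof.
  intros H. assert (Hx : x <> 0) by (intro; subst; simpl in H; lra).
  apply (Rmult_eq_reg_l x); auto. rewrite Rinv_r; auto. simpl in H; lra.
Qed.
Section Frame.
Variables (I : R -> Prop) (alpha T N1 N2 : R -> V3).
Hypotheses (HI : openP I) (Hsm : vsmooth I alpha) (Hu : unit_speed I alpha)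
  (HF : frenet_frame I alpha T N1 N2).

Lemma fr_T s : I s -> T s = vD alpha s.
Proof. intros Hs. destruct HF as [_ H]. apply H; auto. Qed.

Lemma fr_DT s : I s -> vD T s = vD (vD alpha) s.
Proof.
  intros Hs. apply VD_vD. apply (VD_ext I (vD alpha)); auto.
  intros; symmetry; apply fr_T; auto. apply smooth_VD2 with I; auto.
Qed.

Lemma fr_A2nn s : I s -> hm (vD (vD alpha) s) (vD (vD alpha) s) <> 0.
Proof. intros Hs. rewrite <- fr_DT; auto. destruct HF as [_ H]. apply H; auto. Qed.

Lemma fr_N1 s : I s -> exists k, k <> 0 /\ N1 s = vscal k (vD (vD alpha) s).
Proof.
  intros Hs. destruct HF as [_ H]. destruct (H s Hs) as [_ [Hnn [HN1 _]]].
  exists (/ Nrm (vD T s)). rewrite <- fr_DT; auto. split; auto.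
  apply Rinv_neq_0_compat. unfold Nrm. intros Hc. apply sqrt_eq_0 in Hc.
  apply Hnn. apply Rabs_eq_0; auto. apply Rabs_pos.
Qed.

Lemma fr_facts s : I s ->
  hm (T s) (T s) ^ 2 = 1 /\ hm (N2 s) (N2 s) ^ 2 = 1 /\ hm (N1 s) (N1 s) <> 0 /\
  hm (T s) (N1 s) = 0 /\ hm (T s) (N2 s) = 0 /\ hm (N1 s) (N2 s) = 0.
Proof.
  intros Hs. destruct (fr_N1 s Hs) as [k [Hk HN1]].
  destruct HF as [_ H]. destruct (H s Hs) as [_ [_ [_ [H1 [H2 H3]]]]].
  pose proof (TT'_zero I alpha s HI Hsm Hu Hs) as K.
  pose proof (fr_A2nn s Hs) as Hnn.
  rewrite fr_T by auto.
  split; [apply Nrm_one, Hu; auto|]. split.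
  rewrite <- (pow2_abs (hm (N2 s) (N2 s))), H1; ring.
  split. rewrite HN1, hm_scall, hm_scalr. intros Hc. apply Rmult_integral in Hc.
  destruct Hc; auto. apply Rmult_integral in H0; destruct H0; auto.
  split. rewrite HN1, hm_scalr, K; ring.
  split. rewrite hm_sym, <- fr_T; auto.
  rewrite hm_sym; auto.
Qed.

Lemma fr_X_N1 s : I s -> (hm (alpha s) (vD (vD alpha) s) = 0 <-> hm (alpha s) (N1 s) = 0).
Proof.
  intros Hs. destruct (fr_N1 s Hs) as [k [Hk HN1]]. rewrite HN1, hm_scalr. split.
  intros ->; ring. intros Hc. apply Rmult_integral in Hc. destruct Hc; auto. contradiction.
Qed.

End Frame.

Lemma rect_X0 I alpha P : openP I -> vsmooth I alpha -> unit_speed I alpha ->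
  rectifying_with I alpha P -> forall s, I s -> hm (alpha s) (vD (vD alpha) s) = 0.
Proof.
  intros HI Hsm Hu [T [N1 [N2 [lam [mu [HF [Hd _]]]]]]] s Hs.
  apply (fr_X_N1 I alpha T N1 N2); auto.
  destruct (Hd s Hs) as [_ [_ ->]].
  destruct (fr_facts I alpha T N1 N2 HI Hsm Hu HF s Hs) as [_ [_ [_ [H1 [_ H2]]]]].
  rewrite hm_addl, !hm_scall, H1, hm_sym, H2. ring.
Qed.

Lemma X0_rect I alpha T N1 N2 (P : V3 -> V3 -> Prop) eT n2 :
  openP I -> vsmooth I alpha -> unit_speed I alpha -> frenet_frame I alpha T N1 N2 ->
  eT ^ 2 = 1 -> n2 ^ 2 = 1 ->
  (forall s, I s -> hm (alpha s) (vD (vD alpha) s) = 0) ->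
  (forall s, I s -> hm (T s) (T s) = eT) ->
  (forall s, I s -> hm (N2 s) (N2 s) = n2) ->
  (forall s, I s -> P (T s) (N2 s)) ->
  rectifying_with I alpha P.
Proof.
  intros HI Hsm Hu HF HeT Hn2 HX HTT HNN HP.
  exists T, N1, N2, (fun s => eT * hm (alpha s) (vD alpha s)), (fun s => n2 * hm (alpha s) (N2 s)).
  split; auto. split; auto. intros s Hs. split; [|split].
  - eexists. apply (is_derive_scal (fun s => hm (alpha s) (vD alpha s))).
    apply (VD_hm alpha (vD alpha) s _ _ (smooth_VD I alpha s Hsm Hs) (smooth_VD2 I alpha s Hsm Hs)).
  - eexists. apply (is_derive_scal (fun s => hm (alpha s) (N2 s))).
    destruct HF as [HN2 _].
    apply (VD_hm alpha N2 s _ _ (smooth_VD I alpha s Hsm Hs) (smooth_VD I N2 s HN2 Hs)).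
  - destruct (fr_facts I alpha T N1 N2 HI Hsm Hu HF s Hs) as [_ [_ [HN1 [H1 [H2 H3]]]]].
    rewrite (decomp3 (alpha s) (T s) (N1 s) (N2 s)) at 1; auto.
    2: rewrite HTT; auto; intros Hc; rewrite Hc in HeT; lra.
    2: rewrite HNN; auto; intros Hc; rewrite Hc in Hn2; lra.
    assert (E : hm (alpha s) (N1 s) = 0) by (apply (fr_X_N1 I alpha T N1 N2); auto).
    rewrite E, HTT, HNN, <- (fr_T I alpha T N1 N2) by auto.
    apply V3_eq; simpl.
    all: unfold Rdiv; rewrite (inv_sq1 eT), (inv_sq1 n2) by auto; ring.
Qed.

Lemma decomp_F (v u1 u2 u3 : V3) :
  hm u1 u2 = 0 -> hm u1 u3 = 0 -> hm u2 u3 = 0 ->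
  hm u1 u1 <> 0 -> hm u2 u2 <> 0 -> hm u3 u3 <> 0 -> hm v u2 = 0 ->
  hm v v = hm v u1 ^ 2 / hm u1 u1 + hm v u3 ^ 2 / hm u3 u3.
Proof.
  intros H12 H13 H23 N1 N2 N3 Hv.
  rewrite (decomp3 v u1 u2 u3) at 1 by auto.
  rewrite !hm_addl, !hm_scall, (hm_sym u1 v), (hm_sym u2 v), (hm_sym u3 v), Hv. field; auto.
Qed.

Lemma d_inv (g : R -> R) t g1 : is_derive g t g1 -> g t <> 0 ->
  is_derive (fun t => / g t) t (- g1 / g t ^ 2).
Proof. intros; apply is_derive_inv; auto. Qed.

Lemma pow_sq_pos x : x <> 0 -> 0 < x ^ 2.
Proof. intros H. destruct (Rtotal_order x 0) as [H1|[H1|H1]]; [nra|contradiction|nra]. Qed.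

Section Backward.
Variables (I J : R -> Prop) (alpha T N1 N2 y : R -> V3) (phi g g1 g2 : R -> R)
  (a e1 e2 eT : R).
Hypotheses (HI : openP I) (Hsm : vsmooth I alpha) (Hu : unit_speed I alpha)
  (HF : frenet_frame I alpha T N1 N2) (HJ : openP J) (Hrep : reparam J I phi)
  (Hys : vsmooth J y) (Ha : 0 < a)
  (Hg : forall t, is_derive g t (g1 t)) (Hg1 : forall t, is_derive g1 t (g2 t))
  (Hg2 : forall t, g2 t = - (e1 * e2) * g t)
  (HeT : forall t, eT = e1 * g1 t ^ 2 + e2 * g t ^ 2)
  (He1 : e1 ^ 2 = 1) (He2 : e2 ^ 2 = 1) (HeT1 : eT ^ 2 = 1)
  (Hy : forall t, J t -> hm (y t) (y t) = e1 /\ hm (vD y t) (vD y t) = e2 /\ g t <> 0 /\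
                         alpha (phi t) = vscal (a / g t) (y t)).

Let A1 := vD alpha.
Let A2 := vD (vD alpha).

Lemma bw_phi t : J t -> I (phi t) /\ Derive phi t <> 0 /\
  is_derive phi t (Derive phi t) /\ is_derive (Derive phi) t (Derive (Derive phi) t).
Proof.
  intros Ht. destruct Hrep as [Hs [Hm _]]. destruct (Hm t Ht) as [H1 H2].
  split; auto. split; auto. split; apply Derive_correct.
  exact (Hs t Ht 1%nat). exact (Hs t Ht 2%nat).
Qed.

Lemma bw_yy' t : J t -> hm (y t) (vD y t) = 0.
Proof.
  intros Ht. pose proof (smooth_VD J y t Hys Ht) as Hd.
  pose proof (VD_hm _ _ _ _ _ Hd Hd) as Hd2.
  assert (E : hm (vD y t) (y t) + hm (y t) (vD y t) = 0).
  { apply (deriv_unique_loc J (fun t => hm (y t) (y t)) (fun _ => e1) t); auto.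
    intros; apply Hy; auto. apply d_const. }
  rewrite hm_sym in E. lra.
Qed.

Lemma d_rho t : g t <> 0 -> is_derive (fun t => a / g t) t (- a * g1 t / g t ^ 2).
Proof.
  intros Hz. eapply is_derive_eq. apply (is_derive_scal (fun t => / g t)).
  apply d_inv; auto. field; auto.
Qed.

Lemma bw_vec t : J t ->
  vscal (Derive phi t) (A1 (phi t)) =
  vadd (vscal (- a * g1 t / g t ^ 2) (y t)) (vscal (a / g t) (vD y t)).
Proof.
  intros Ht. destruct (bw_phi t Ht) as [HIt [_ [Hp _]]].
  destruct (Hy t Ht) as [_ [_ [Hz Heq]]].
  apply (VD_unique (fun t => alpha (phi t)) t).
  - apply (VD_comp alpha phi t); auto. apply smooth_VD with I; auto.
  - apply (VD_ext J (fun t => vscal (a / g t) (y t))); auto.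
    intros t' Ht'. symmetry; apply Hy; auto.
    apply (VD_scal (fun t => a / g t) y). apply d_rho; auto. apply smooth_VD with J; auto.
Qed.

Lemma pos_div4 (x z : R) : 0 < x -> z <> 0 -> 0 < x ^ 2 / z ^ 4.
Proof.
  intros. apply Rdiv_lt_0_compat. nra. replace (z ^ 4) with ((z ^ 2) ^ 2) by ring.
  apply pow_sq_pos. apply pow_nonzero; auto.
Qed.

Lemma bw_alg t : J t ->
  hm (A1 (phi t)) (A1 (phi t)) = eT /\ Derive phi t ^ 2 = a ^ 2 / g t ^ 4 /\
  Derive phi t * hm (alpha (phi t)) (A1 (phi t)) = - a ^ 2 * e1 * g1 t / g t ^ 3 /\
  hm (alpha (phi t)) (alpha (phi t)) = a ^ 2 * e1 / g t ^ 2.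
Proof.
  intros Ht. destruct (bw_phi t Ht) as [HIt [Hp0 _]].
  destruct (Hy t Ht) as [Hyy [Hy'y' [Hz Heq]]].
  pose proof (bw_yy' t Ht) as Hyy'.
  pose proof (bw_vec t Ht) as Hv.
  set (p := Derive phi t) in *. set (E := hm (A1 (phi t)) (A1 (phi t))).
  assert (HE : E ^ 2 = 1) by (apply Nrm_one, Hu; auto).
  assert (K1 : p ^ 2 * E = a ^ 2 * eT / g t ^ 4).
  { replace (p ^ 2 * E) with (hm (vscal p (A1 (phi t))) (vscal p (A1 (phi t)))).
    2: { unfold E; rewrite hm_scall, hm_scalr; ring. }
    rewrite Hv, !hm_addl, !hm_addr, !hm_scall, !hm_scalr, (hm_sym (vD y t) (y t)), Hyy, Hy'y', Hyy'.
    rewrite (HeT t). field; auto. }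
  assert (K2 : p * hm (alpha (phi t)) (A1 (phi t)) = - a ^ 2 * e1 * g1 t / g t ^ 3).
  { replace (p * hm (alpha (phi t)) (A1 (phi t))) with (hm (alpha (phi t)) (vscal p (A1 (phi t)))).
    2: { rewrite hm_scalr; ring. }
    rewrite Hv, Heq, !hm_addr, !hm_scall, !hm_scalr, Hyy, Hyy'. field; auto. }
  assert (K3 : hm (alpha (phi t)) (alpha (phi t)) = a ^ 2 * e1 / g t ^ 2).
  { rewrite Heq, hm_scall, hm_scalr, Hyy. field; auto. }
  assert (Hpos : 0 < a ^ 2 / g t ^ 4).
  { apply Rdiv_lt_0_compat. nra. replace (g t ^ 4) with ((g t ^ 2) ^ 2) by ring.
    apply pow_sq_pos. apply pow_nonzero; auto. }
  set (c := a ^ 2 / g t ^ 4) in *.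
  assert (K1' : p ^ 2 * E = c * eT) by (rewrite K1; unfold c; field; auto).
  assert (Hp2 : 0 < p ^ 2) by (apply pow_sq_pos; auto).
  assert (HEe : 0 < E * eT).
  { assert (p ^ 2 * (E * eT) = c) by (replace (p^2*(E*eT)) with ((p^2*E)*eT) by ring;
      rewrite K1'; simpl in HeT1; nra).
    nra. }
  assert (HEe1 : E * eT = 1).
  { assert ((E * eT) ^ 2 = 1) by (rewrite Rpow_mult_distr, HE, HeT1; ring). nra. }
  assert (HEE : E = eT).
  { assert (Hee : eT * eT = 1) by (simpl in HeT1; lra).
    rewrite <- (Rmult_1_r E), <- Hee, <- Rmult_assoc, HEe1; ring. }
  split; auto. split.
  - rewrite HEE in K1'. apply (Rmult_eq_reg_r eT). lra. intros Hc; rewrite Hc in HeT1; simpl in HeT1; lra.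
  - split; auto.
Qed.

Lemma d_kdivpow (k : R) n t : g t <> 0 ->
  is_derive (fun t => k / g t ^ S n) t (- k * INR (S n) * g1 t * g t ^ n / g t ^ (2 * S n)).
Proof.
  intros Hz. eapply is_derive_eq. apply (is_derive_scal (fun t => / g t ^ S n)).
  apply is_derive_inv. apply is_derive_pow. apply Hg. apply pow_nonzero; auto.
  simpl Init.Nat.pred. replace (2 * S n)%nat with (S n + S n)%nat by lia.
  rewrite pow_add. field. apply pow_nonzero; auto.
Qed.

Lemma bw_X t : J t -> hm (alpha (phi t)) (A2 (phi t)) = 0.
Proof.
  intros Ht. destruct (bw_phi t Ht) as [HIt [Hp0 [Hp Hq]]].
  destruct (Hy t Ht) as [_ [_ [Hz _]]].
  destruct (bw_alg t Ht) as [HE [Hp2 [HpH HF']]].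
  set (p := Derive phi t) in *. set (q := Derive (Derive phi) t) in *.
  set (s := phi t) in *.
  assert (Kq : 2 * p * q = - a ^ 2 * 4 * g1 t * g t ^ 3 / g t ^ 8).
  { apply (deriv_unique_loc J (fun t => Derive phi t * Derive phi t) (fun t => a ^ 2 / g t ^ 4) t); auto.
    - intros t' Ht'. destruct (bw_alg t' Ht') as [_ [E _]]. rewrite <- E. ring.
    - eapply is_derive_eq. apply d_mult; apply Hq. fold p. ring.
    - eapply is_derive_eq. apply (d_kdivpow (a ^ 2) 3 t Hz). simpl (INR 4). simpl (2 * 4)%nat. field; auto. }
  set (X := hm (alpha s) (A2 s)).
  assert (HH : is_derive (fun s => hm (alpha s) (A1 s)) s (hm (A1 s) (A1 s) + X)).
  { apply (VD_hm alpha A1 s). apply smooth_VD with I; auto. apply smooth_VD2 with I; auto. }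
  set (H := hm (alpha s) (A1 s)) in *.
  assert (KM : (hm (A1 s) (A1 s) + X) * p * p + H * q =
     - a ^ 2 * e1 * (g2 t * g t ^ 3 - g1 t * (3 * g1 t * g t ^ 2)) / g t ^ 6).
  { apply (deriv_unique_loc J (fun t => hm (alpha (phi t)) (A1 (phi t)) * Derive phi t)
       (fun t => - a ^ 2 * e1 * g1 t * / g t ^ 3) t); auto.
    - intros t' Ht'. destruct (bw_alg t' Ht') as [_ [_ [E _]]].
      destruct (Hy t' Ht') as [_ [_ [Hz' _]]]. rewrite Rmult_comm, E. field; auto.
    - eapply is_derive_eq. apply d_mult. apply (d_comp (fun s => hm (alpha s) (A1 s)) phi); eauto.
      apply Hq. fold p s H. simpl. fold s H. ring.
    - eapply is_derive_eq. apply (d_mult (fun t => - a ^ 2 * e1 * g1 t) (fun t => / g t ^ 3)).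
      apply is_derive_scal. apply Hg1. apply is_derive_inv. apply is_derive_pow. apply Hg.
      apply pow_nonzero; auto.
      simpl (INR 3); simpl Init.Nat.pred. cbv beta. field; auto. }
  rewrite HE in KM. rewrite Hg2 in KM.
  assert (Hq' : H * q = 2 * a ^ 2 * e1 * g1 t ^ 2 / g t ^ 4).
  { apply (Rmult_eq_reg_l (p ^ 2)). 2: apply pow_nonzero; auto.
    replace (p ^ 2 * (H * q)) with ((p * H) * (2 * p * q) / 2) by field.
    rewrite HpH, Kq, Hp2. field; auto. }
  rewrite Hq' in KM. replace (eT + X) with ((eT + X)) in KM by auto.
  assert (KM' : (eT + X) * (p * p) = a ^ 2 * (e2 * g t ^ 2 + 3 * e1 * g1 t ^ 2 - 2 * e1 * g1 t ^ 2) / g t ^ 4).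
  { replace ((eT + X) * (p * p)) with ((eT + X) * p * p) by ring.
    apply (Rplus_eq_reg_r (2 * a ^ 2 * e1 * g1 t ^ 2 / g t ^ 4)). rewrite KM.
    assert (E11 : e1 * e1 = 1) by (simpl in He1; lra).
    match goal with |- ?L = ?R => assert (D : L - R = a^2*e2*(e1*e1-1)/g t^2) by (field; auto) end.
    rewrite E11, Rminus_diag, Rmult_0_r in D. unfold Rdiv in D. rewrite Rmult_0_l in D. lra. }
  replace (p * p) with (p ^ 2) in KM' by ring. rewrite Hp2 in KM'.
  assert (eT + X = e2 * g t ^ 2 + e1 * g1 t ^ 2).
  { apply (Rmult_eq_reg_r (a ^ 2 / g t ^ 4)). rewrite KM'. field; auto.
    apply Rgt_not_eq. apply pos_div4; auto. }
  rewrite (HeT t) in H0. lra.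
Qed.

Lemma sign_eq (n k m c : R) : n ^ 2 = 1 -> k ^ 2 = 1 -> 0 <= m -> 0 < c -> m * n = c * k -> n = k.
Proof.
  intros Hn Hk Hm Hc E.
  assert (Hnk : 0 < n * k).
  { assert (m * (n * k) = c) by (replace (m * (n * k)) with ((m * n) * k) by ring;
      rewrite E; simpl in Hk; nra). nra. }
  assert ((n * k) ^ 2 = 1) by (rewrite Rpow_mult_distr, Hn, Hk; ring).
  assert (n * k = 1) by nra.
  simpl in Hk. nra.
Qed.

Lemma bw_main s : I s ->
  hm (T s) (T s) = eT /\ hm (alpha s) (A2 s) = 0 /\ 0 < e1 * hm (alpha s) (alpha s) /\
  hm (N2 s) (N2 s) = eT * e1 * e2.
Proof.
  intros Hs. destruct Hrep as [_ [_ [Hsurj _]]]. destruct (Hsurj s Hs) as [t [Ht <-]].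
  destruct (bw_phi t Ht) as [HIt [Hp0 _]].
  destruct (Hy t Ht) as [_ [_ [Hz _]]].
  destruct (bw_alg t Ht) as [HE [Hp2 [HpH HFF]]].
  pose proof (bw_X t Ht) as HX.
  rewrite (fr_T I alpha T N1 N2) by auto.
  split; auto. split; auto. split.
  { rewrite HFF. replace (e1 * (a ^ 2 * e1 / g t ^ 2)) with (a ^ 2 * (e1 * e1) / g t ^ 2) by (field; auto).
    replace (e1 * e1) with 1 by (simpl in He1; lra). apply Rdiv_lt_0_compat. nra.
    apply pow_sq_pos; auto. }
  destruct (fr_facts I alpha T N1 N2 HI Hsm Hu HF (phi t) HIt) as [HT2 [HN22 [HN1 [H1 [H2 H3]]]]].
  assert (HXN : hm (alpha (phi t)) (N1 (phi t)) = 0) by (apply (fr_X_N1 I alpha T N1 N2); auto).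
  assert (Hnz : forall x, x ^ 2 = 1 -> x <> 0) by (intros x Hx Hc; rewrite Hc in Hx; simpl in Hx; lra).
  pose proof (decomp_F (alpha (phi t)) (T (phi t)) (N1 (phi t)) (N2 (phi t)) H1 H2 H3
     (Hnz _ HT2) HN1 (Hnz _ HN22) HXN) as HD.
  rewrite (fr_T I alpha T N1 N2) in HD by auto. fold A1 in HD. rewrite HE in HD.
  set (n2 := hm (N2 (phi t)) (N2 (phi t))) in *.
  set (m := hm (alpha (phi t)) (N2 (phi t)) ^ 2) in *.
  set (H := hm (alpha (phi t)) (A1 (phi t))) in *.
  assert (HH2 : H ^ 2 = a ^ 2 * g1 t ^ 2 / g t ^ 2).
  { apply (Rmult_eq_reg_l (Derive phi t ^ 2)). 2: apply pow_nonzero; auto.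
    replace (Derive phi t ^ 2 * H ^ 2) with ((Derive phi t * H) ^ 2) by ring.
    rewrite HpH, Hp2.
    replace ((- a ^ 2 * e1 * g1 t / g t ^ 3) ^ 2) with (a ^ 4 * (e1 * e1) * g1 t ^ 2 / g t ^ 6) by (field; auto).
    replace (e1 * e1) with 1 by (simpl in He1; lra). field; auto. }
  rewrite HFF, HH2 in HD. unfold Rdiv in HD. rewrite (inv_sq1 eT), (inv_sq1 n2) in HD by auto.
  apply (sign_eq n2 (eT * e1 * e2) m (a ^ 2)); auto.
  - rewrite !Rpow_mult_distr, HeT1, He1, He2; ring.
  - unfold m; apply pow2_ge_0.
  - nra.
  - assert (E1 : m * n2 = a ^ 2 * (e1 - eT * g1 t ^ 2) / g t ^ 2).
    { apply (Rplus_eq_reg_l (a ^ 2 * g1 t ^ 2 * / g t ^ 2 * eT)). rewrite <- HD. field; auto. }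
    rewrite E1.
    assert (E2 : e1 - eT * g1 t ^ 2 = eT * e1 * e2 * g t ^ 2).
    { assert (Ea : eT * eT = 1) by (simpl in HeT1; lra).
      assert (Eb : e1 * e1 = 1) by (simpl in He1; lra).
      pose proof (HeT t) as HH.
      replace (eT * e1 * e2 * g t ^ 2) with (eT * e1 * (e2 * g t ^ 2)) by ring.
      replace (e2 * g t ^ 2) with (eT - e1 * g1 t ^ 2) by lra.
      replace (eT * e1 * (eT - e1 * g1 t ^ 2)) with ((eT * eT) * e1 - eT * (e1 * e1) * g1 t ^ 2) by ring.
      rewrite Ea, Eb. ring. }
    rewrite E2. field; auto.
Qed.

End Backward.

Lemma sq1_cases x : x ^ 2 = 1 -> x = 1 \/ x = -1.
Proof. intros H. assert ((x - 1) * (x + 1) = 0) by (simpl in H; nra).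
  apply Rmult_integral in H0. destruct H0; [left|right]; lra. Qed.

Lemma alg_fw1 X Y u v a eT dl e1 e2 sg : sg ^ 2 = 1 -> e1 ^ 2 = 1 -> e2 ^ 2 = 1 -> v <> 0 -> a <> 0 ->
  hm X X = eT * (sg * a * (u / v)) ^ 2 + dl * a ^ 2 -> hm X Y = eT * (sg * a * (u / v)) -> hm Y Y = eT ->
  hm (vadd (vscal (u / a) X) (vscal (v / a) (vscal (- sg * a * (u ^ 2 + e1 * e2 * v ^ 2) / v ^ 2) Y)))
     (vadd (vscal (u / a) X) (vscal (v / a) (vscal (- sg * a * (u ^ 2 + e1 * e2 * v ^ 2) / v ^ 2) Y)))
  = eT * v ^ 2 + dl * u ^ 2.
Proof.
  intros Hs H1 H2 Hv Ha EXX EXY EYY.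
  rewrite !hm_addl, !hm_addr, !hm_scall, !hm_scalr, (hm_sym Y X), EXX, EXY, EYY.
  destruct (sq1_cases sg Hs) as [-> | ->]; destruct (sq1_cases e1 H1) as [-> | ->];
  destruct (sq1_cases e2 H2) as [-> | ->]; field; split; assumption.
Qed.

Lemma alg_fw2 X u v a eT dl sg : sg ^ 2 = 1 -> v <> 0 -> a <> 0 ->
  hm X X = eT * (sg * a * (u / v)) ^ 2 + dl * a ^ 2 ->
  hm (vscal (v / a) X) (vscal (v / a) X) = eT * u ^ 2 + dl * v ^ 2.
Proof.
  intros Hs Hv Ha EXX. rewrite hm_scall, hm_scalr, EXX.
  destruct (sq1_cases sg Hs) as [-> | ->]; field; split; assumption.
Qed.

Section Forward.
Variables (I D : R -> Prop) (alpha : R -> V3) (g g1 g2 psi : R -> R)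
  (a c eT dl e1 e2 sg W : R) (C S : V3 -> Prop).
Hypotheses (HIi : is_open_itv I) (Hsm : vsmooth I alpha)
  (HE : forall s, I s -> hm (vD alpha s) (vD alpha s) = eT)
  (HH : forall s, I s -> hm (alpha s) (vD alpha s) = eT * (s + c))
  (HFf : forall s, I s -> hm (alpha s) (alpha s) = eT * (s + c) ^ 2 + dl * a ^ 2)
  (Ha : 0 < a)
  (Hg : forall t, is_derive g t (g1 t)) (Hg1 : forall t, is_derive g1 t (g2 t))
  (Hg2 : forall t, g2 t = - (e1 * e2) * g t)
  (HW : forall t, g1 t ^ 2 + e1 * e2 * g t ^ 2 = W) (HW1 : W ^ 2 = 1)
  (Hid1 : forall t, eT * g1 t ^ 2 + dl * g t ^ 2 = e1)
  (Hid2 : forall t, eT * g t ^ 2 + dl * g1 t ^ 2 = e2)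
  (Hsg : sg ^ 2 = 1) (HeT : eT ^ 2 = 1) (He1 : e1 ^ 2 = 1) (He2 : e2 ^ 2 = 1)
  (Hgs : forall n, Cn n (fun _ => True) g /\ Cn n (fun _ => True) g1)
  (HD : is_open_itv D) (HDg : forall t, D t -> g t <> 0)
  (Hpsi : forall s, I s -> D (psi s) /\ sg * a * (g1 (psi s) / g (psi s)) - c = s)
  (HC : forall v, hm v v = e2 -> C v) (HS : forall x, hm x x = e1 -> S x).

Let phi := fun t => sg * a * (g1 t / g t) - c.
Let J := fun t => D t /\ I (phi t).
Let y := fun t => vscal (g t / a) (alpha (phi t)).

Lemma fw_dphi t : g t <> 0 -> is_derive phi t (- sg * a * (g1 t ^ 2 + e1 * e2 * g t ^ 2) / g t ^ 2).
Proof.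
  intros Hz. unfold phi. eapply is_derive_eq.
  apply (d_minus (fun t => sg * a * (g1 t / g t)) (fun _ => c)). 2: apply d_const.
  apply is_derive_scal. apply (d_mult g1 (fun t => / g t)). apply Hg1. apply d_inv; auto.
  rewrite Hg2. field; assumption.
Qed.

Let k := - sg * W.

Lemma fw_mono x z : D x -> D z -> x < z -> k * phi x < k * phi z.
Proof.
  intros Hx Hz Hxz. destruct HD as [lo [hi [Hlh HDe]]].
  apply (incr_function (fun t => k * phi t) lo hi (fun t => a / g t ^ 2)).
  - intros t H1 H2. assert (Ht : D t) by (apply HDe; auto).
    assert (Hgz : g t <> 0) by (apply HDg; auto).
    eapply is_derive_eq. apply is_derive_scal. apply fw_dphi; auto.
    rewrite HW. unfold k.
    assert (Hs2 : sg * sg = 1) by (simpl in Hsg; lra).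
    assert (Hw2 : W * W = 1) by (simpl in HW1; lra).
    replace (- sg * W * (- sg * a * W / g t ^ 2)) with ((sg * sg) * (W * W) * a / g t ^ 2) by (field; assumption).
    rewrite Hs2, Hw2. field; assumption.
  - intros t H1 H2. assert (Ht : D t) by (apply HDe; auto).
    apply Rdiv_lt_0_compat; auto. apply pow_sq_pos; auto.
  - apply HDe; auto.
  - auto.
  - apply HDe; auto.
Qed.

Lemma k_cases : k = 1 \/ k = -1.
Proof. apply sq1_cases. unfold k. replace ((- sg * W) ^ 2) with (sg ^ 2 * W ^ 2) by ring.
  rewrite Hsg, HW1; ring. Qed.

Lemma fw_inj x z : D x -> D z -> phi x = phi z -> x = z.
Proof.
  intros Hx Hz E. destruct (Rtotal_order x z) as [H|[H|H]]; auto.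
  - pose proof (fw_mono x z Hx Hz H). rewrite E in H0. lra.
  - pose proof (fw_mono z x Hz Hx H). rewrite E in H0. lra.
Qed.

Lemma fw_J_itv : is_open_itv J.
Proof.
  destruct (itv_props I HIi) as [Ic [Iu Id]].
  destruct (itv_props D HD) as [Dc [Du Dd]].
  assert (Hne : exists s, I s) by (destruct HIi as [lo [hi [Hlh He]]];
     destruct lo as [lo| |], hi as [hi| |]; simpl in Hlh; try contradiction;
     [exists ((lo+hi)/2) | exists (lo + 1) | exists (hi - 1) | exists 0];
     apply He; simpl; auto; lra).
  assert (Hlt : forall t t', J t -> D t' -> k * phi t < k * phi t' -> t < t').
  { intros t t' [Ht _] Ht' Hk. destruct (Rtotal_order t t') as [H|[H|H]]; auto.
    subst; lra. pose proof (fw_mono t' t Ht' Ht H). lra. }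
  apply props_itv.
  - destruct Hne as [s Hs]. exists (psi s). destruct (Hpsi s Hs) as [H1 H2].
    split; auto. unfold phi; rewrite H2; auto.
  - intros x z w [Hx1 Hx2] [Hw1 Hw2] [Hz1 Hz2]. split. apply (Dc x z w); auto; lra.
    assert (Dz : D z) by (apply (Dc x z w); auto; lra).
    destruct (Rle_lt_or_eq_dec x z Hz1) as [Hxz|Hxz]; [|subst; auto].
    destruct (Rle_lt_or_eq_dec z w Hz2) as [Hzw|Hzw]; [|subst; auto].
    pose proof (fw_mono x z Hx1 Dz Hxz). pose proof (fw_mono z w Dz Hw1 Hzw).
    destruct k_cases as [Hk|Hk]; rewrite Hk in *.
    + apply (Ic (phi x) (phi z) (phi w)); auto; lra.
    + apply (Ic (phi w) (phi z) (phi x)); auto; lra.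
  - intros t [Ht1 Ht2].
    assert (E : exists s, I s /\ k * phi t < k * s).
    { destruct k_cases as [Hk|Hk]; rewrite Hk.
      destruct (Iu _ Ht2) as [u [Hu1 Hu2]]. exists u; split; auto; lra.
      destruct (Id _ Ht2) as [u [Hu1 Hu2]]. exists u; split; auto; lra. }
    destruct E as [s [Hs Hks]]. destruct (Hpsi s Hs) as [H1 H2].
    exists (psi s). split. apply Hlt; auto. split; auto. unfold phi; rewrite H2; auto.
    split; auto. unfold phi; rewrite H2; auto.
  - intros t [Ht1 Ht2].
    assert (E : exists s, I s /\ k * s < k * phi t).
    { destruct k_cases as [Hk|Hk]; rewrite Hk.
      destruct (Id _ Ht2) as [u [Hu1 Hu2]]. exists u; split; auto; lra.
      destruct (Iu _ Ht2) as [u [Hu1 Hu2]]. exists u; split; auto; lra. }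
    destruct E as [s [Hs Hks]]. destruct (Hpsi s Hs) as [H1 H2].
    exists (psi s). split.
    + destruct (Rtotal_order (psi s) t) as [H|[H|H]]; auto.
      rewrite H in H2. unfold phi in Hks. rewrite H2 in Hks. lra.
      pose proof (fw_mono t (psi s) Ht1 H1 H). unfold phi at 2 in H0. rewrite H2 in H0. lra.
    + split; auto. unfold phi; rewrite H2; auto.
Qed.

Lemma fw_main : rep_form I alpha g C S.
Proof.
  pose proof fw_J_itv as HJi. pose proof (itv_open J HJi) as HJ.
  pose proof (itv_open I HIi) as HIo.
  assert (HT : openP (fun _ : R => True)) by (intros x _; exists (mkposreal 1 Rlt_0_1); auto).
  assert (HJg : forall t, J t -> g t <> 0) by (intros t [Ht _]; auto).
  assert (Hgn : forall n, Cn n J g) by (intros n; apply (Cn_sub n (fun _ => True)); auto; apply Hgs).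
  assert (Hg1n : forall n, Cn n J g1) by (intros n; apply (Cn_sub n (fun _ => True)); auto; apply Hgs).
  assert (Hphin : forall n, Cn n J phi).
  { intros n. apply (Cn_minus n J (fun t => sg * a * (g1 t / g t)) (fun _ => c)); auto.
    apply (Cn_scal n J (sg * a) (fun t => g1 t / g t)); auto. apply Cn_div; auto.
    apply Cn_const; auto. }
  assert (Hdp : forall t, J t -> Derive phi t = - sg * a * (g1 t ^ 2 + e1 * e2 * g t ^ 2) / g t ^ 2).
  { intros t Ht. apply is_derive_unique, fw_dphi; auto. }
  assert (Hsg' : sg <> 0) by (intros Hc; rewrite Hc in Hsg; simpl in Hsg; lra).
  assert (HW' : W <> 0) by (intros Hc; rewrite Hc in HW1; simpl in HW1; lra).
  assert (Key : forall t, J t -> hm (vD y t) (vD y t) = e2 /\ hm (y t) (y t) = e1).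
  { intros t Ht. pose proof (HJg t Ht) as Hz. destruct Ht as [HDt HIt].
    assert (Hv : VD y t (vadd (vscal (g1 t / a) (alpha (phi t)))
                 (vscal (g t / a) (vscal (- sg * a * (g1 t ^ 2 + e1 * e2 * g t ^ 2) / g t ^ 2)
                     (vD alpha (phi t)))))).
    { apply (VD_scal (fun t => g t / a) (fun t => alpha (phi t))).
      eapply is_derive_eq. apply (d_mult g (fun _ => / a)). apply Hg. apply d_const.
      unfold Rdiv; ring.
      apply (VD_comp alpha phi t). apply smooth_VD with I; auto. apply fw_dphi; auto. }
    rewrite (VD_vD _ _ _ Hv). unfold y.
    assert (E1 : hm (alpha (phi t)) (alpha (phi t)) = eT * (sg * a * (g1 t / g t)) ^ 2 + dl * a ^ 2).
    { rewrite HFf by auto. unfold phi. f_equal. f_equal. f_equal. ring. }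
    assert (E2 : hm (alpha (phi t)) (vD alpha (phi t)) = eT * (sg * a * (g1 t / g t))).
    { rewrite HH by auto. unfold phi. f_equal. ring. }
    split.
    - transitivity (eT * g t ^ 2 + dl * g1 t ^ 2); [|apply Hid2].
      apply alg_fw1; auto; lra.
    - transitivity (eT * g1 t ^ 2 + dl * g t ^ 2); [|apply Hid1].
      apply (alg_fw2 _ _ _ _ _ _ sg); auto; lra. }
  exists J, phi, y, a. split; auto. split; [|split; [auto|split; [|split]]].
  - split; [|split; [|split]].
    + apply Cn_rsmooth; auto.
    + intros t Ht. split. apply Ht. rewrite Hdp, HW; auto.
      unfold Rdiv. repeat apply Rmult_integral_contrapositive_currified; auto; try lra.
      apply Rinv_neq_0_compat, pow_nonzero; auto.
    + intros s Hs. destruct (Hpsi s Hs) as [H1 H2]. exists (psi s). split; auto.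
      split; auto. unfold phi; rewrite H2; auto.
    + intros t1 t2 [H1 _] [H2 _] E. apply fw_inj; auto.
  - destruct Hsm as [S1 [S2 S3]].
    split; [|split]; apply Cn_rsmooth; intros n.
    + apply (Cn_mult n J (fun t => g t / a) (fun t => c1 (alpha (phi t)))); auto.
      apply (Cn_div n J g (fun _ => a)); auto. intros; lra. apply Cn_const; auto.
      apply (Cn_comp n J I (fun s => c1 (alpha s)) phi); auto. intros t [_ Ht]; auto.
      apply rsmooth_Cn; auto.
    + apply (Cn_mult n J (fun t => g t / a) (fun t => c2 (alpha (phi t)))); auto.
      apply (Cn_div n J g (fun _ => a)); auto. intros; lra. apply Cn_const; auto.
      apply (Cn_comp n J I (fun s => c2 (alpha s)) phi); auto. intros t [_ Ht]; auto.
      apply rsmooth_Cn; auto.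
    + apply (Cn_mult n J (fun t => g t / a) (fun t => c3 (alpha (phi t)))); auto.
      apply (Cn_div n J g (fun _ => a)); auto. intros; lra. apply Cn_const; auto.
      apply (Cn_comp n J I (fun s => c3 (alpha s)) phi); auto. intros t [_ Ht]; auto.
      apply rsmooth_Cn; auto.
  - intros t Ht. apply one_Nrm. rewrite (proj1 (Key t Ht)). exact He2.
  - intros t Ht. destruct (Key t Ht) as [K1 K2]. split; auto. split; auto. split. auto.
    unfold y. apply V3_eq; simpl; field; split; auto; lra.
Qed.

End Forward.

Lemma const_on_itv I (f : R -> R) x z : convexP I ->
  (forall t, I t -> is_derive f t 0) -> I x -> I z -> f x = f z.
Proof.
  intros Hc Hd Hx Hz. destruct (Rtotal_order x z) as [H|[H|H]].
  - apply (@eq_is_derive R_NormedModule f x z); auto. intros t Ht. apply Hd. apply (Hc x t z); auto.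
  - subst; auto.
  - symmetry. apply (@eq_is_derive R_NormedModule f z x); auto. intros t Ht. apply Hd. apply (Hc z t x); auto.
Qed.

Lemma fw_HF I alpha eT : is_open_itv I -> vsmooth I alpha -> eT ^ 2 = 1 ->
  (forall s, I s -> hm (vD alpha s) (vD alpha s) = eT) ->
  (forall s, I s -> hm (alpha s) (vD (vD alpha) s) = 0) ->
  exists c d, forall s, I s -> hm (alpha s) (vD alpha s) = eT * (s + c) /\
                            hm (alpha s) (alpha s) = eT * (s + c) ^ 2 + d.
Proof.
  intros HIi Hsm HeT HE HX.
  destruct (itv_props I HIi) as [Hc _].
  assert (Hne : exists s, I s) by (destruct HIi as [lo [hi [Hlh He]]];
     destruct lo as [lo| |], hi as [hi| |]; simpl in Hlh; try contradiction;
     [exists ((lo+hi)/2) | exists (lo + 1) | exists (hi - 1) | exists 0];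
     apply He; simpl; auto; lra).
  destruct Hne as [s0 Hs0].
  assert (Hee : eT * eT = 1) by (simpl in HeT; lra).
  set (c := eT * hm (alpha s0) (vD alpha s0) - s0).
  assert (KH : forall s, I s -> hm (alpha s) (vD alpha s) = eT * (s + c)).
  { intros s Hs.
    assert (E : hm (alpha s) (vD alpha s) - eT * s = hm (alpha s0) (vD alpha s0) - eT * s0).
    { apply (const_on_itv I (fun x => hm (alpha x) (vD alpha x) - eT * x)); auto.
      intros t Ht. eapply is_derive_eq.
      apply (d_minus (fun x => hm (alpha x) (vD alpha x)) (fun x => eT * x)).
      apply (VD_hm alpha (vD alpha)). apply smooth_VD with I; auto. apply smooth_VD2 with I; auto.
      eapply is_derive_eq. apply (is_derive_scal (fun x => x)). apply (@is_derive_id R_AbsRing).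
      reflexivity. rewrite HE, HX by auto. simpl. change (@one R_AbsRing) with 1. ring. }
    unfold c. replace (eT * (s + (eT * hm (alpha s0) (vD alpha s0) - s0)))
      with (eT * s + (eT * eT) * hm (alpha s0) (vD alpha s0) - eT * s0) by ring.
    rewrite Hee. lra. }
  exists c, (hm (alpha s0) (alpha s0) - eT * (s0 + c) ^ 2). intros s Hs. split; auto.
  assert (E : hm (alpha s) (alpha s) - eT * (s + c) ^ 2 = hm (alpha s0) (alpha s0) - eT * (s0 + c) ^ 2).
  { apply (const_on_itv I (fun x => hm (alpha x) (alpha x) - eT * (x + c) ^ 2)); auto.
    intros t Ht. eapply is_derive_eq.
    apply (d_minus (fun x => hm (alpha x) (alpha x)) (fun x => eT * (x + c) ^ 2)).
    apply (VD_hm alpha alpha). apply smooth_VD with I; auto. apply smooth_VD with I; auto.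
    apply is_derive_scal. apply (is_derive_pow (fun x => x + c) 2).
    eapply is_derive_eq. apply (d_plus (fun x => x) (fun _ => c)).
    apply (@is_derive_id R_AbsRing). apply d_const. change (@one R_AbsRing) with 1. reflexivity.
    rewrite (hm_sym (vD alpha t) (alpha t)), KH by auto. simpl. ring. }
  lra.
Qed.

Lemma nonempty_itv I : is_open_itv I -> exists s, I s.
Proof.
  intros [lo [hi [Hlh He]]].
  destruct lo as [lo| |], hi as [hi| |]; simpl in Hlh; try contradiction;
  [exists ((lo+hi)/2) | exists (lo + 1) | exists (hi - 1) | exists 0];
  apply He; simpl; auto; lra.
Qed.

Lemma fw_mu I alpha P eT : is_open_itv I -> vsmooth I alpha -> unit_speed I alpha -> eT ^ 2 = 1 ->
  rectifying_with I alpha P -> (forall s, I s -> hm (vD alpha s) (vD alpha s) = eT) ->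
  exists c d (T N2 : R -> V3), d <> 0 /\ forall s, I s ->
    hm (alpha s) (vD alpha s) = eT * (s + c) /\ hm (alpha s) (alpha s) = eT * (s + c) ^ 2 + d /\
    T s = vD alpha s /\ P (T s) (N2 s) /\ hm (T s) (N2 s) = 0 /\ hm (N2 s) (N2 s) ^ 2 = 1 /\
    alpha s <> V0 /\ exists m, m <> 0 /\ m ^ 2 * hm (N2 s) (N2 s) = d.
Proof.
  intros HIi Hsm Hu HeT Hrec HE.
  pose proof (itv_open I HIi) as HI.
  pose proof (rect_X0 I alpha P HI Hsm Hu Hrec) as HX.
  destruct (fw_HF I alpha eT HIi Hsm HeT HE HX) as [c [d Hcd]].
  destruct Hrec as [T [N1 [N2 [lam [mu [HF [Hd HP]]]]]]].
  assert (Hee : eT * eT = 1) by (simpl in HeT; lra).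
  assert (Key : forall s, I s -> lam s = s + c /\ mu s ^ 2 * hm (N2 s) (N2 s) = d /\
                         alpha s = vadd (vscal (s + c) (T s)) (vscal (mu s) (N2 s))).
  { intros s Hs. destruct (Hd s Hs) as [_ [_ Ha]].
    destruct (fr_facts I alpha T N1 N2 HI Hsm Hu HF s Hs) as [HT2 [HN22 [HN1 [H1 [H2 H3]]]]].
    destruct (Hcd s Hs) as [KH KF].
    pose proof (HE s Hs) as HEs.
    rewrite <- (fr_T I alpha T N1 N2 HF s Hs) in KH, HEs.
    assert (Hl : lam s = s + c).
    { rewrite Ha, hm_addl, !hm_scall, (hm_sym (N2 s) (T s)), H2, HEs in KH.
      apply (Rmult_eq_reg_l eT). lra. intros Hc; rewrite Hc in HeT; simpl in HeT; lra. }
    split; auto.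
    assert (Hm : mu s ^ 2 * hm (N2 s) (N2 s) = d).
    { rewrite Ha in KF at 2. rewrite hm_addr, !hm_scalr, KH in KF.
      rewrite Ha in KF. rewrite hm_addl, !hm_scall, H2 in KF.
      rewrite Hl in KF. lra. }
    split; auto. rewrite <- Hl; auto. }
  assert (Hd0 : d <> 0).
  { intros Hd0. subst d.
    destruct (itv_props I HIi) as [_ [Iu _]].
    destruct (nonempty_itv I HIi) as [s0 Hs0]. destruct (Iu s0 Hs0) as [s1 [Hs01 Hs1]].
    assert (Ex : exists s, I s /\ s + c <> 0).
    { destruct (Req_dec (s0 + c) 0). exists s1; split; auto; lra. exists s0; auto. }
    destruct Ex as [s [Hs Hsc]].
    assert (Hal : forall t, I t -> alpha t = vscal (t + c) (vD alpha t)).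
    { intros t Ht. destruct (Key t Ht) as [_ [Hm Ha]]. rewrite Ha.
      destruct (fr_facts I alpha T N1 N2 HI Hsm Hu HF t Ht) as [_ [HN22 _]].
      assert (mu t = 0).
      { assert (HN0 : hm (N2 t) (N2 t) <> 0) by (intros Hc; rewrite Hc in HN22; simpl in HN22; lra).
        assert (mu t ^ 2 = 0). apply (Rmult_eq_reg_r (hm (N2 t) (N2 t))); auto. lra.
        simpl in H. assert (mu t * mu t = 0) by lra. apply Rmult_integral in H0; destruct H0; auto. }
      rewrite H, (fr_T I alpha T N1 N2) by auto. apply V3_eq; simpl; ring. }
    assert (V1 : VD alpha s (vD alpha s)) by (apply smooth_VD with I; auto).
    assert (V2 : VD alpha s (vadd (vscal 1 (vD alpha s)) (vscal (s + c) (vD (vD alpha) s)))).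
    { apply (VD_ext I (fun t => vscal (t + c) (vD alpha t))); auto.
      intros; symmetry; auto.
      apply (VD_scal (fun t => t + c) (vD alpha)).
      eapply is_derive_eq. apply (d_plus (fun x => x) (fun _ => c)).
      apply (@is_derive_id R_AbsRing). apply d_const. change (@one R_AbsRing) with 1. ring.
      apply smooth_VD2 with I; auto. }
    pose proof (VD_unique _ _ _ _ V1 V2) as E.
    assert (Z : vscal (s + c) (vD (vD alpha) s) = V0).
    { destruct (vD alpha s) as [x1 x2 x3]. destruct (vD (vD alpha) s) as [z1 z2 z3].
      simpl in E. injection E. intros. unfold V0. apply V3_eq; simpl; lra. }
    assert (Hnn : hm (vD (vD alpha) s) (vD (vD alpha) s) <> 0) by (apply (fr_A2nn I alpha T N1 N2); auto).
    assert (hm (vscal (s + c) (vD (vD alpha) s)) (vscal (s + c) (vD (vD alpha) s)) = 0)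
      by (rewrite Z; unfold hm, V0; simpl; ring).
    rewrite hm_scall, hm_scalr in H. apply Hnn.
    apply Rmult_integral in H. destruct H; [contradiction|].
    apply Rmult_integral in H. destruct H; [contradiction|auto]. }
  exists c, d, T, N2. split; auto. intros s Hs.
  destruct (Hcd s Hs) as [KH KF]. destruct (Key s Hs) as [_ [Hm Ha]].
  destruct (fr_facts I alpha T N1 N2 HI Hsm Hu HF s Hs) as [HT2 [HN22 [HN1 [H1 [H2 H3]]]]].
  assert (Hmu : mu s <> 0) by (intros Hc; rewrite Hc in Hm; apply Hd0; rewrite <- Hm; ring).
  split; auto. split; auto. split. apply (fr_T I alpha T N1 N2); auto.
  split. apply HP; auto. split; auto. split; auto. split.
  - intros H0. assert (hm (alpha s) (N2 s) = 0) by (rewrite H0; unfold hm, V0; simpl; ring).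
    rewrite Ha, hm_addl, !hm_scall, H2 in H.
    assert (HN0 : hm (N2 s) (N2 s) <> 0) by (intros Hc; rewrite Hc in HN22; simpl in HN22; lra).
    apply Hmu. apply (Rmult_eq_reg_r (hm (N2 s) (N2 s))); auto. lra.
  - exists (mu s). split; auto.
Qed.

Lemma sc2 x : sin x ^ 2 + cos x ^ 2 = 1.
Proof. rewrite <- !Rsqr_pow2. apply sin2_cos2. Qed.

Lemma hm_comb a b u v : hm (vadd (vscal a u) (vscal b v)) (vadd (vscal a u) (vscal b v)) =
  a ^ 2 * hm u u + 2 * a * b * hm u v + b ^ 2 * hm v v.
Proof. unfold hm; simpl; ring. Qed.

Lemma sp_plane u v : hm u u = 1 -> hm v v = 1 -> hm u v = 0 -> spacelike_plane u v.
Proof.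
  intros H1 H2 H3 a b Hab. rewrite hm_comb, H1, H2, H3.
  destruct Hab as [H|H]; [assert (0 < a ^ 2) by (apply pow_sq_pos; auto) | assert (0 < b ^ 2) by (apply pow_sq_pos; auto)];
  assert (0 <= a ^ 2) by apply pow2_ge_0; assert (0 <= b ^ 2) by apply pow2_ge_0; lra.
Qed.

Lemma tl_plane u v : hm u u * hm v v = -1 -> hm u u ^ 2 = 1 -> hm u v = 0 -> timelike_plane u v.
Proof.
  intros H1 H2 H3. split.
  - intros a b E.
    assert (K1 : hm (vadd (vscal a u) (vscal b v)) u = 0) by (rewrite E; unfold hm; simpl; ring).
    assert (K2 : hm (vadd (vscal a u) (vscal b v)) v = 0) by (rewrite E; unfold hm; simpl; ring).
    rewrite hm_addl, !hm_scall in K1, K2. rewrite (hm_sym v u) in K1. rewrite H3 in K1, K2.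
    assert (hm u u <> 0) by (intros Hc; rewrite Hc in H1; lra).
    assert (hm v v <> 0) by (intros Hc; rewrite Hc in H1; lra).
    split. apply (Rmult_eq_reg_r (hm u u)); auto; lra. apply (Rmult_eq_reg_r (hm v v)); auto; lra.
  - destruct (sq1_cases _ H2) as [E|E].
    + exists 0, 1. rewrite hm_comb. rewrite E in H1. lra.
    + exists 1, 0. rewrite hm_comb. rewrite E. lra.
Qed.

Lemma C_sp v : spacelike v -> hm v v ^ 2 = 1 -> hm v v = 1.
Proof.
  intros [H|H] H2. destruct (sq1_cases _ H2); lra.
  subst v. unfold hm in H2; simpl in H2. lra.
Qed.
Lemma C_tl v : timelike v -> hm v v ^ 2 = 1 -> hm v v = -1.
Proof. intros H H2. unfold timelike in H. destruct (sq1_cases _ H2); lra. Qed.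

Lemma bw_wrap (I : R -> Prop) (alpha : R -> V3) (g g1 g2 : R -> R) (e1 e2 eT : R) (C S : V3 -> Prop) :
  is_open_itv I -> vsmooth I alpha -> unit_speed I alpha -> has_nonnull_frenet_frame I alpha ->
  (forall t, is_derive g t (g1 t)) -> (forall t, is_derive g1 t (g2 t)) ->
  (forall t, g2 t = - (e1 * e2) * g t) -> (forall t, eT = e1 * g1 t ^ 2 + e2 * g t ^ 2) ->
  e1 ^ 2 = 1 -> e2 ^ 2 = 1 -> eT ^ 2 = 1 ->
  (forall v, C v -> hm v v ^ 2 = 1 -> hm v v = e2) -> (forall x, S x -> hm x x = e1) ->
  rep_form I alpha g C S ->
  exists T N1 N2, frenet_frame I alpha T N1 N2 /\ forall s, I s ->
    hm (T s) (T s) = eT /\ T s = vD alpha s /\ hm (alpha s) (vD (vD alpha) s) = 0 /\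
    0 < e1 * hm (alpha s) (alpha s) /\ hm (N2 s) (N2 s) = eT * e1 * e2 /\ hm (T s) (N2 s) = 0.
Proof.
  intros HIi Hsm Hu [T [N1 [N2 HF]]] Hg Hg1 Hg2 HeT He1 He2 HeT1 HC HS
    [J [phi [y [a [HJi [Hrep [Ha [Hys [Huy Hy]]]]]]]]].
  pose proof (itv_open I HIi) as HI. pose proof (itv_open J HJi) as HJ.
  exists T, N1, N2. split; auto. intros s Hs.
  destruct (bw_main I J alpha T N1 N2 y phi g g1 g2 a e1 e2 eT HI Hsm Hu HF HJ Hrep Hys Ha
     Hg Hg1 Hg2 HeT He1 He2 HeT1) with (s := s) as [K1 [K2 [K3 K4]]]; auto.
  - intros t Ht. destruct (Hy t Ht) as [HC' [HS' [Hg0 Ha']]]. split; auto. split; auto.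
    apply HC; auto. apply Nrm_one. apply Huy; auto.
  - split; auto. split. apply (fr_T I alpha T N1 N2); auto. split; auto. split; auto. split; auto.
    destruct (fr_facts I alpha T N1 N2 HI Hsm Hu HF s Hs) as [_ [_ [_ [_ [H _]]]]]. auto.
Qed.

Section Cases.
Variables (I : R -> Prop) (alpha : R -> V3).
Hypotheses (HIi : is_open_itv I) (Hsm : vsmooth I alpha) (Hu : unit_speed I alpha)
  (Hfr : has_nonnull_frenet_frame I alpha).

Let HI := itv_open I HIi.

Lemma sq1 : (1:R) ^ 2 = 1. Proof. ring. Qed.
Lemma sqm1 : (-1:R) ^ 2 = 1. Proof. ring. Qed.

Lemma bw_i : rep_form I alpha cos spacelike in_S21 -> rectifying_with I alpha spacelike_plane.
Proof.
  intros Hr.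
  destruct (bw_wrap I alpha cos (fun t => - sin t) (fun t => - cos t) 1 1 1 spacelike in_S21
    HIi Hsm Hu Hfr d_cos d_nsin) as [T [N1 [N2 [HF K]]]]; auto using sq1.
  - intros; ring.
  - intros t. pose proof (sc2 t). nra.
  - intros v Hv H2; apply C_sp; auto.
  - apply (X0_rect I alpha T N1 N2 spacelike_plane 1 1); auto using sq1.
    + intros s Hs; apply K; auto.
    + intros s Hs; apply K; auto.
    + intros s Hs. destruct (K s Hs) as [_ [_ [_ [_ [H _]]]]]. rewrite H; ring.
    + intros s Hs. destruct (K s Hs) as [H1 [_ [_ [_ [H2 H3]]]]]. apply sp_plane; auto.
      rewrite H2; ring.
Qed.

Lemma bw_iia : rep_form I alpha sinh timelike in_S21 ->
  spacelike_curve I alpha /\ rectifying_with I alpha timelike_plane /\ spacelike_position I alpha.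
Proof.
  intros Hr.
  destruct (bw_wrap I alpha sinh cosh sinh 1 (-1) 1 timelike in_S21
    HIi Hsm Hu Hfr d_sinh d_cosh) as [T [N1 [N2 [HF K]]]]; auto using sq1, sqm1.
  - intros; ring.
  - intros t. pose proof (cosh_sinh_id t). lra.
  - intros v Hv H2; apply C_tl; auto.
  - split; [|split].
    + intros s Hs. destruct (K s Hs) as [H1 [H2 _]]. left. rewrite <- H2, H1. lra.
    + apply (X0_rect I alpha T N1 N2 timelike_plane 1 (-1)); auto using sq1, sqm1.
      * intros s Hs; apply K; auto.
      * intros s Hs; apply K; auto.
      * intros s Hs. destruct (K s Hs) as [_ [_ [_ [_ [H _]]]]]. rewrite H; ring.
      * intros s Hs. destruct (K s Hs) as [H1 [_ [_ [_ [H2 H3]]]]]. apply tl_plane; auto.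
        rewrite H1, H2; ring. rewrite H1; ring.
    + intros s Hs. destruct (K s Hs) as [_ [_ [_ [H _]]]]. left. lra.
Qed.

Lemma bw_iib : rep_form I alpha sinh spacelike in_H20 ->
  timelike_curve I alpha /\ rectifying_with I alpha timelike_plane /\ timelike_position I alpha.
Proof.
  intros Hr.
  destruct (bw_wrap I alpha sinh cosh sinh (-1) 1 (-1) spacelike in_H20
    HIi Hsm Hu Hfr d_sinh d_cosh) as [T [N1 [N2 [HF K]]]]; auto using sq1, sqm1.
  - intros; ring.
  - intros t. pose proof (cosh_sinh_id t). lra.
  - intros v Hv H2; apply C_sp; auto.
  - split; [|split].
    + intros s Hs. destruct (K s Hs) as [H1 [H2 _]]. unfold timelike. rewrite <- H2, H1. lra.
    + apply (X0_rect I alpha T N1 N2 timelike_plane (-1) 1); auto using sq1, sqm1.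
      * intros s Hs; apply K; auto.
      * intros s Hs; apply K; auto.
      * intros s Hs. destruct (K s Hs) as [_ [_ [_ [_ [H _]]]]]. rewrite H; ring.
      * intros s Hs. destruct (K s Hs) as [H1 [_ [_ [_ [H2 H3]]]]]. apply tl_plane; auto.
        rewrite H1, H2; ring. rewrite H1; ring.
    + intros s Hs. destruct (K s Hs) as [_ [_ [_ [H _]]]]. unfold timelike. lra.
Qed.

Lemma bw_iiia : rep_form I alpha cosh spacelike in_H20 ->
  spacelike_curve I alpha /\ rectifying_with I alpha timelike_plane /\ timelike_position I alpha.
Proof.
  intros Hr.
  destruct (bw_wrap I alpha cosh sinh cosh (-1) 1 1 spacelike in_H20
    HIi Hsm Hu Hfr d_cosh d_sinh) as [T [N1 [N2 [HF K]]]]; auto using sq1, sqm1.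
  - intros; ring.
  - intros t. pose proof (cosh_sinh_id t). lra.
  - intros v Hv H2; apply C_sp; auto.
  - split; [|split].
    + intros s Hs. destruct (K s Hs) as [H1 [H2 _]]. left. rewrite <- H2, H1. lra.
    + apply (X0_rect I alpha T N1 N2 timelike_plane 1 (-1)); auto using sq1, sqm1.
      * intros s Hs; apply K; auto.
      * intros s Hs; apply K; auto.
      * intros s Hs. destruct (K s Hs) as [_ [_ [_ [_ [H _]]]]]. rewrite H; ring.
      * intros s Hs. destruct (K s Hs) as [H1 [_ [_ [_ [H2 H3]]]]]. apply tl_plane; auto.
        rewrite H1, H2; ring. rewrite H1; ring.
    + intros s Hs. destruct (K s Hs) as [_ [_ [_ [H _]]]]. unfold timelike. lra.
Qed.

Lemma bw_iiib : rep_form I alpha cosh timelike in_S21 ->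
  timelike_curve I alpha /\ rectifying_with I alpha timelike_plane /\ spacelike_position I alpha.
Proof.
  intros Hr.
  destruct (bw_wrap I alpha cosh sinh cosh 1 (-1) (-1) timelike in_S21
    HIi Hsm Hu Hfr d_cosh d_sinh) as [T [N1 [N2 [HF K]]]]; auto using sq1, sqm1.
  - intros; ring.
  - intros t. pose proof (cosh_sinh_id t). lra.
  - intros v Hv H2; apply C_tl; auto.
  - split; [|split].
    + intros s Hs. destruct (K s Hs) as [H1 [H2 _]]. unfold timelike. rewrite <- H2, H1. lra.
    + apply (X0_rect I alpha T N1 N2 timelike_plane (-1) 1); auto using sq1, sqm1.
      * intros s Hs; apply K; auto.
      * intros s Hs; apply K; auto.
      * intros s Hs. destruct (K s Hs) as [_ [_ [_ [_ [H _]]]]]. rewrite H; ring.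
      * intros s Hs. destruct (K s Hs) as [H1 [_ [_ [_ [H2 H3]]]]]. apply tl_plane; auto.
        rewrite H1, H2; ring. rewrite H1; ring.
    + intros s Hs. destruct (K s Hs) as [_ [_ [_ [H _]]]]. left. lra.
Qed.

End Cases.

Lemma tl_n2 u v : timelike_plane u v -> hm u v = 0 -> hm u u ^ 2 = 1 -> hm v v ^ 2 = 1 ->
  hm v v = - hm u u.
Proof.
  intros [_ [a [b Hab]]] H0 Hu Hv. rewrite hm_comb, H0 in Hab.
  destruct (sq1_cases _ Hu) as [Eu|Eu]; destruct (sq1_cases _ Hv) as [Ev|Ev]; try lra.
  - rewrite Eu, Ev in Hab. assert (0 <= a ^ 2) by apply pow2_ge_0.
    assert (0 <= b ^ 2) by apply pow2_ge_0. lra.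
  - exfalso. apply (two_timelike u v); auto; lra.
Qed.

Lemma same_side I c a : convexP I -> (exists s, I s) -> 0 < a ->
  (forall s, I s -> a ^ 2 < (s + c) ^ 2) ->
  exists sg, sg ^ 2 = 1 /\ forall s, I s -> a < sg * (s + c).
Proof.
  intros Hc [s0 Hs0] Ha H.
  assert (Hgen : forall sg, sg ^ 2 = 1 -> a < sg * (s0 + c) -> forall s, I s -> a < sg * (s + c)).
  { intros sg Hsg Hs0' s Hs. destruct (sq1_cases _ Hsg) as [->| ->].
    - destruct (Rlt_or_le a (1 * (s + c))) as [K|K]; auto. exfalso.
      pose proof (H s Hs). assert (s + c < - a) by nra.
      assert (Hm : I (-c)) by (apply (Hc s (-c) s0); auto; lra).
      pose proof (H (-c) Hm) as Hx. replace (-c + c) with 0 in Hx by ring. nra.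
    - destruct (Rlt_or_le a (-1 * (s + c))) as [K|K]; auto. exfalso.
      pose proof (H s Hs). assert (s + c > a) by nra.
      assert (Hm : I (-c)) by (apply (Hc s0 (-c) s); auto; lra).
      pose proof (H (-c) Hm) as Hx. replace (-c + c) with 0 in Hx by ring. nra. }
  pose proof (H s0 Hs0).
  destruct (Rlt_or_le 0 (s0 + c)).
  - exists 1. split. ring. apply Hgen. ring. nra.
  - exists (-1). split. ring. apply Hgen. ring. nra.
Qed.

Lemma E_curve_sp I alpha : unit_speed I alpha -> spacelike_curve I alpha ->
  forall s, I s -> hm (vD alpha s) (vD alpha s) = 1.
Proof. intros Hu Hc s Hs. apply C_sp. apply Hc; auto. apply Nrm_one, Hu; auto. Qed.
Lemma E_curve_tl I alpha : unit_speed I alpha -> timelike_curve I alpha ->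
  forall s, I s -> hm (vD alpha s) (vD alpha s) = -1.
Proof. intros Hu Hc s Hs. apply C_tl. apply Hc; auto. apply Nrm_one, Hu; auto. Qed.

Lemma itv_full : is_open_itv (fun _ : R => True).
Proof. exists m_infty, p_infty. split. simpl; auto. intros; simpl; tauto. Qed.
Lemma itv_pos : is_open_itv (fun t : R => 0 < t).
Proof. exists (Finite 0), p_infty. split. simpl; auto. intros; simpl; tauto. Qed.
Lemma itv_pi : is_open_itv (fun t : R => - (PI / 2) < t < PI / 2).
Proof. exists (Finite (- (PI / 2))), (Finite (PI / 2)). split. simpl; pose proof PI_RGT_0; lra.
  intros; simpl; tauto. Qed.

Lemma Cn_cos_nsin n : Cn n (fun _ => True) cos /\ Cn n (fun _ => True) (fun t => - sin t).
Proof.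
  assert (HT : openP (fun _ : R => True)) by (intros x _; exists (mkposreal 1 Rlt_0_1); auto).
  destruct (Cn_sincos n _ HT). split; auto. apply Cn_opp; auto.
Qed.
Lemma Cn_sh_ch n : Cn n (fun _ => True) sinh /\ Cn n (fun _ => True) cosh.
Proof.
  assert (HT : openP (fun _ : R => True)) by (intros x _; exists (mkposreal 1 Rlt_0_1); auto).
  apply Cn_sinhcosh; auto.
Qed.
Lemma Cn_ch_sh n : Cn n (fun _ => True) cosh /\ Cn n (fun _ => True) sinh.
Proof. destruct (Cn_sh_ch n); split; auto. Qed.

Section FCases.
Variables (I : R -> Prop) (alpha : R -> V3).
Hypotheses (HIi : is_open_itv I) (Hsm : vsmooth I alpha) (Hu : unit_speed I alpha).

Lemma fw_i : rectifying_with I alpha spacelike_plane -> rep_form I alpha cos spacelike in_S21.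
Proof.
  intros Hrec. pose proof (itv_open I HIi) as HI.
  assert (HE : forall s, I s -> hm (vD alpha s) (vD alpha s) = 1).
  { intros s Hs. destruct Hrec as [T [N1 [N2 [lam [mu [HF [Hd HP]]]]]]].
    pose proof (HP s Hs 1 0 (or_introl R1_neq_R0)) as K. rewrite hm_comb in K.
    rewrite (fr_T I alpha T N1 N2) in K by auto.
    destruct (sq1_cases _ (Nrm_one _ (Hu s Hs))) as [E|E]; auto. rewrite E in K. lra. }
  destruct (fw_mu I alpha spacelike_plane 1 HIi Hsm Hu sq1 Hrec HE) as [c [d [T [N2 [Hd0 K]]]]].
  assert (Hdp : 0 < d).
  { destruct (nonempty_itv I HIi) as [s0 Hs0].
    destruct (K s0 Hs0) as [_ [_ [_ [HP [_ [HN2 [_ [m [Hm Hmd]]]]]]]]].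
    pose proof (HP 0 1 (or_intror R1_neq_R0)) as KP. rewrite hm_comb in KP.
    destruct (sq1_cases _ HN2) as [E|E]; rewrite E in *.
    rewrite <- Hmd. rewrite Rmult_1_r. apply pow_sq_pos; auto. lra. }
  set (a := sqrt d). assert (Ha : 0 < a) by (apply sqrt_lt_R0; auto).
  assert (Ha2 : a ^ 2 = d) by (apply pow2_sqrt; lra).
  assert (HPI := PI_RGT_0).
  apply (fw_main I (fun t => - (PI / 2) < t < PI / 2) alpha cos (fun t => - sin t) (fun t => - cos t)
    (fun s => atan (- (s + c) / a)) a c 1 1 1 1 1 1 spacelike in_S21); auto using sq1.
  - intros s Hs; apply K; auto.
  - intros s Hs. destruct (K s Hs) as [_ [H _]]. rewrite H, Ha2; ring.
  - exact d_cos.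
  - exact d_nsin.
  - intros; ring.
  - intros t; pose proof (sc2 t); nra.
  - intros t; pose proof (sc2 t); nra.
  - intros t; pose proof (sc2 t); nra.
  - exact Cn_cos_nsin.
  - exact itv_pi.
  - intros t [H1 H2]. apply Rgt_not_eq. apply cos_gt_0; auto.
  - intros s Hs. pose proof (atan_bound (- (s + c) / a)) as [B1 B2].
    split. split; lra.
    pose proof (tan_atan (- (s + c) / a)) as E. unfold tan in E.
    assert (cos (atan (- (s + c) / a)) <> 0) by (apply Rgt_not_eq, cos_gt_0; lra).
    replace (- sin (atan (- (s + c) / a)) / cos (atan (- (s + c) / a)))
      with (- (sin (atan (- (s + c) / a)) / cos (atan (- (s + c) / a)))) by (field; auto).
    rewrite E. field. lra.
  - intros v Hv. left. lra.
Qed.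

Lemma n2_tl_sp : forall (T N2 : R -> V3) d, (forall s, I s -> T s = vD alpha s) ->
  (forall s, I s -> hm (vD alpha s) (vD alpha s) = 1) ->
  (forall s, I s -> timelike_plane (T s) (N2 s) /\ hm (T s) (N2 s) = 0 /\ hm (N2 s) (N2 s) ^ 2 = 1 /\
     exists m, m <> 0 /\ m ^ 2 * hm (N2 s) (N2 s) = d) -> d < 0.
Proof.
  intros T N2 d HT HE K. destruct (nonempty_itv I HIi) as [s0 Hs0].
  destruct (K s0 Hs0) as [HP [H0 [HN2 [m [Hm Hmd]]]]].
  assert (E : hm (N2 s0) (N2 s0) = - hm (T s0) (T s0)) by (apply tl_n2; auto; rewrite HT, HE by auto; ring).
  rewrite E, HT, HE in Hmd by auto. rewrite <- Hmd.
  pose proof (pow_sq_pos m Hm). lra.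
Qed.

Lemma n2_tl_tl : forall (T N2 : R -> V3) d, (forall s, I s -> T s = vD alpha s) ->
  (forall s, I s -> hm (vD alpha s) (vD alpha s) = -1) ->
  (forall s, I s -> timelike_plane (T s) (N2 s) /\ hm (T s) (N2 s) = 0 /\ hm (N2 s) (N2 s) ^ 2 = 1 /\
     exists m, m <> 0 /\ m ^ 2 * hm (N2 s) (N2 s) = d) -> 0 < d.
Proof.
  intros T N2 d HT HE K. destruct (nonempty_itv I HIi) as [s0 Hs0].
  destruct (K s0 Hs0) as [HP [H0 [HN2 [m [Hm Hmd]]]]].
  assert (E : hm (N2 s0) (N2 s0) = - hm (T s0) (T s0)) by (apply tl_n2; auto; rewrite HT, HE by auto; ring).
  rewrite E, HT, HE in Hmd by auto. rewrite <- Hmd.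
  pose proof (pow_sq_pos m Hm). lra.
Qed.

Lemma fw_iia : spacelike_curve I alpha /\ rectifying_with I alpha timelike_plane /\
  spacelike_position I alpha -> rep_form I alpha sinh timelike in_S21.
Proof.
  intros [Hcv [Hrec Hpos]].
  pose proof (E_curve_sp I alpha Hu Hcv) as HE.
  destruct (fw_mu I alpha timelike_plane 1 HIi Hsm Hu sq1 Hrec HE) as [c [d [T [N2 [Hd0 K]]]]].
  assert (Hdn : d < 0).
  { apply (n2_tl_sp T N2 d); auto. intros s Hs; apply K; auto.
    intros s Hs. destruct (K s Hs) as [_ [_ [_ [HP [H0 [HN [_ Hm]]]]]]]. auto. }
  set (a := sqrt (- d)). assert (Ha : 0 < a) by (apply sqrt_lt_R0; lra).
  assert (Ha2 : a ^ 2 = - d) by (apply pow2_sqrt; lra).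
  assert (Hgt : forall s, I s -> a ^ 2 < (s + c) ^ 2).
  { intros s Hs. destruct (K s Hs) as [_ [HF [_ [_ [_ [_ [Hne _]]]]]]].
    destruct (Hpos s Hs) as [P|P]. lra. contradiction. }
  destruct (itv_props I HIi) as [Ic _].
  destruct (same_side I c a Ic (nonempty_itv I HIi) Ha Hgt) as [sg [Hsg Hside]].
  apply (fw_main I (fun t => 0 < t) alpha sinh cosh sinh
    (fun s => arcoth (sg * (s + c) / a)) a c 1 (-1) 1 (-1) sg 1 timelike in_S21); auto using sq1, sqm1.
  - intros s Hs; apply K; auto.
  - intros s Hs. destruct (K s Hs) as [_ [H _]]. rewrite H, Ha2; ring.
  - exact d_sinh.
  - exact d_cosh.
  - intros; ring.
  - intros t; pose proof (cosh_sinh_id t); lra.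
  - intros t; pose proof (cosh_sinh_id t); lra.
  - intros t; pose proof (cosh_sinh_id t); lra.
  - exact Cn_sh_ch.
  - exact itv_pos.
  - intros t Ht. apply Rgt_not_eq, sinh_pos; auto.
  - intros s Hs. assert (Hx : 1 < sg * (s + c) / a).
    { apply (Rmult_lt_reg_r a); auto. replace (sg * (s + c) / a * a) with (sg * (s + c)) by (field; lra).
      rewrite Rmult_1_l. apply Hside; auto. }
    destruct (coth_arcoth _ Hx) as [H1 H2]. split; auto. rewrite H2.
    replace (sg * a * (sg * (s + c) / a) - c) with ((sg * sg) * (s + c) - c) by (field; lra).
    replace (sg * sg) with 1 by (simpl in Hsg; lra). ring.
  - intros v Hv. unfold timelike. lra.
Qed.

Lemma fw_iib : timelike_curve I alpha /\ rectifying_with I alpha timelike_plane /\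
  timelike_position I alpha -> rep_form I alpha sinh spacelike in_H20.
Proof.
  intros [Hcv [Hrec Hpos]].
  pose proof (E_curve_tl I alpha Hu Hcv) as HE.
  destruct (fw_mu I alpha timelike_plane (-1) HIi Hsm Hu sqm1 Hrec HE) as [c [d [T [N2 [Hd0 K]]]]].
  assert (Hdn : 0 < d).
  { apply (n2_tl_tl T N2 d); auto. intros s Hs; apply K; auto.
    intros s Hs. destruct (K s Hs) as [_ [_ [_ [HP [H0 [HN [_ Hm]]]]]]]. auto. }
  set (a := sqrt d). assert (Ha : 0 < a) by (apply sqrt_lt_R0; lra).
  assert (Ha2 : a ^ 2 = d) by (apply pow2_sqrt; lra).
  assert (Hgt : forall s, I s -> a ^ 2 < (s + c) ^ 2).
  { intros s Hs. destruct (K s Hs) as [_ [HF _]]. pose proof (Hpos s Hs) as P.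
    unfold timelike in P. lra. }
  destruct (itv_props I HIi) as [Ic _].
  destruct (same_side I c a Ic (nonempty_itv I HIi) Ha Hgt) as [sg [Hsg Hside]].
  apply (fw_main I (fun t => 0 < t) alpha sinh cosh sinh
    (fun s => arcoth (sg * (s + c) / a)) a c (-1) 1 (-1) 1 sg 1 spacelike in_H20); auto using sq1, sqm1.
  - intros s Hs; apply K; auto.
  - intros s Hs. destruct (K s Hs) as [_ [H _]]. rewrite H, Ha2; ring.
  - exact d_sinh.
  - exact d_cosh.
  - intros; ring.
  - intros t; pose proof (cosh_sinh_id t); lra.
  - intros t; pose proof (cosh_sinh_id t); lra.
  - intros t; pose proof (cosh_sinh_id t); lra.
  - exact Cn_sh_ch.
  - exact itv_pos.
  - intros t Ht. apply Rgt_not_eq, sinh_pos; auto.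
  - intros s Hs. assert (Hx : 1 < sg * (s + c) / a).
    { apply (Rmult_lt_reg_r a); auto. replace (sg * (s + c) / a * a) with (sg * (s + c)) by (field; lra).
      rewrite Rmult_1_l. apply Hside; auto. }
    destruct (coth_arcoth _ Hx) as [H1 H2]. split; auto. rewrite H2.
    replace (sg * a * (sg * (s + c) / a) - c) with ((sg * sg) * (s + c) - c) by (field; lra).
    replace (sg * sg) with 1 by (simpl in Hsg; lra). ring.
  - intros v Hv. left. lra.
Qed.

Lemma fw_iiia : spacelike_curve I alpha /\ rectifying_with I alpha timelike_plane /\
  timelike_position I alpha -> rep_form I alpha cosh spacelike in_H20.
Proof.
  intros [Hcv [Hrec Hpos]].
  pose proof (E_curve_sp I alpha Hu Hcv) as HE.
  destruct (fw_mu I alpha timelike_plane 1 HIi Hsm Hu sq1 Hrec HE) as [c [d [T [N2 [Hd0 K]]]]].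
  assert (Hdn : d < 0).
  { apply (n2_tl_sp T N2 d); auto. intros s Hs; apply K; auto.
    intros s Hs. destruct (K s Hs) as [_ [_ [_ [HP [H0 [HN [_ Hm]]]]]]]. auto. }
  set (a := sqrt (- d)). assert (Ha : 0 < a) by (apply sqrt_lt_R0; lra).
  assert (Ha2 : a ^ 2 = - d) by (apply pow2_sqrt; lra).
  assert (Hlt : forall s, I s -> (s + c) ^ 2 < a ^ 2).
  { intros s Hs. destruct (K s Hs) as [_ [HF _]]. pose proof (Hpos s Hs) as P.
    unfold timelike in P. lra. }
  apply (fw_main I (fun _ => True) alpha cosh sinh cosh
    (fun s => artanh ((s + c) / a)) a c 1 (-1) (-1) 1 1 (-1) spacelike in_H20); auto using sq1, sqm1.
  - intros s Hs; apply K; auto.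
  - intros s Hs. destruct (K s Hs) as [_ [H _]]. rewrite H, Ha2; ring.
  - exact d_cosh.
  - exact d_sinh.
  - intros; ring.
  - intros t; pose proof (cosh_sinh_id t); lra.
  - intros t; pose proof (cosh_sinh_id t); lra.
  - intros t; pose proof (cosh_sinh_id t); lra.
  - exact Cn_ch_sh.
  - exact itv_full.
  - intros t Ht. apply Rgt_not_eq, cosh_pos.
  - intros s Hs. assert (Hx : -1 < (s + c) / a < 1).
    { pose proof (Hlt s Hs). assert (- a < s + c < a) by nra.
      split; [apply (Rmult_lt_reg_r a) | apply (Rmult_lt_reg_r a)]; auto; field_simplify; lra. }
    split; auto. rewrite (tanh_artanh _ Hx). field. lra.
  - intros v Hv. left. lra.
Qed.

Lemma fw_iiib : timelike_curve I alpha /\ rectifying_with I alpha timelike_plane /\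
  spacelike_position I alpha -> rep_form I alpha cosh timelike in_S21.
Proof.
  intros [Hcv [Hrec Hpos]].
  pose proof (E_curve_tl I alpha Hu Hcv) as HE.
  destruct (fw_mu I alpha timelike_plane (-1) HIi Hsm Hu sqm1 Hrec HE) as [c [d [T [N2 [Hd0 K]]]]].
  assert (Hdn : 0 < d).
  { apply (n2_tl_tl T N2 d); auto. intros s Hs; apply K; auto.
    intros s Hs. destruct (K s Hs) as [_ [_ [_ [HP [H0 [HN [_ Hm]]]]]]]. auto. }
  set (a := sqrt d). assert (Ha : 0 < a) by (apply sqrt_lt_R0; lra).
  assert (Ha2 : a ^ 2 = d) by (apply pow2_sqrt; lra).
  assert (Hlt : forall s, I s -> (s + c) ^ 2 < a ^ 2).
  { intros s Hs. destruct (K s Hs) as [_ [HF [_ [_ [_ [_ [Hne _]]]]]]].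
    destruct (Hpos s Hs) as [P|P]. lra. contradiction. }
  apply (fw_main I (fun _ => True) alpha cosh sinh cosh
    (fun s => artanh ((s + c) / a)) a c (-1) 1 1 (-1) 1 (-1) timelike in_S21); auto using sq1, sqm1.
  - intros s Hs; apply K; auto.
  - intros s Hs. destruct (K s Hs) as [_ [H _]]. rewrite H, Ha2; ring.
  - exact d_cosh.
  - exact d_sinh.
  - intros; ring.
  - intros t; pose proof (cosh_sinh_id t); lra.
  - intros t; pose proof (cosh_sinh_id t); lra.
  - intros t; pose proof (cosh_sinh_id t); lra.
  - exact Cn_ch_sh.
  - exact itv_full.
  - intros t Ht. apply Rgt_not_eq, cosh_pos.
  - intros s Hs. assert (Hx : -1 < (s + c) / a < 1).
    { pose proof (Hlt s Hs). assert (- a < s + c < a) by nra.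
      split; [apply (Rmult_lt_reg_r a) | apply (Rmult_lt_reg_r a)]; auto; field_simplify; lra. }
    split; auto. rewrite (tanh_artanh _ Hx). field. lra.
  - intros v Hv. unfold timelike. lra.
Qed.

End FCases.

Theorem theorem3p4 (I : R -> Prop) (alpha : R -> V3) :
  is_open_itv I -> vsmooth I alpha -> unit_speed I alpha ->
  has_nonnull_frenet_frame I alpha ->
  (* (i) *)
  (rectifying_with I alpha spacelike_plane <->
   rep_form I alpha cos spacelike in_S21) /\
  (* (ii), spacelike case *)
  (spacelike_curve I alpha /\ rectifying_with I alpha timelike_plane /\
     spacelike_position I alpha <->
   rep_form I alpha sinh timelike in_S21) /\
  (* (ii), timelike case *)
  (timelike_curve I alpha /\ rectifying_with I alpha timelike_plane /\
     timelike_position I alpha <->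
   rep_form I alpha sinh spacelike in_H20) /\
  (* (iii), spacelike case *)
  (spacelike_curve I alpha /\ rectifying_with I alpha timelike_plane /\
     timelike_position I alpha <->
   rep_form I alpha cosh spacelike in_H20) /\
  (* (iii), timelike case *)
  (timelike_curve I alpha /\ rectifying_with I alpha timelike_plane /\
     spacelike_position I alpha <->
   rep_form I alpha cosh timelike in_S21).
Proof.
  intros HIi Hsm Hu Hfr.
  split; [|split; [|split; [|split]]]; split; intros H.
  - apply (fw_i I alpha); auto.
  - apply (bw_i I alpha); auto.
  - apply (fw_iia I alpha); auto.
  - apply (bw_iia I alpha); auto.
  - apply (fw_iib I alpha); auto.
  - apply (bw_iib I alpha); auto.
  - apply (fw_iiia I alpha); auto.
  - apply (bw_iiia I alpha); auto.
  - apply (fw_iiib I alpha); auto.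
  - apply (bw_iiib I alpha); auto.
Qed.
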